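(* Let $X$ be an infinite dimensional real Banach space with $dens(X)=\kappa$. Then there is a sequence $(x_\alpha,x^*_\alpha)_{\alpha<\kappa}\subseteq X\times X^*$ such that $x^*_\alpha(x_\alpha)=1$ for all $\alpha<\kappa$ and $x^*_\alpha(x_\beta)=0$ for all $\beta<\alpha<\kappa$. In particular $hL(B_{X^*})=dens(X)$, where $B_{X^*}$ is the dual unit ball with the weak$^*$ topology.
   Context: $dens(X)$ is the least cardinality of a norm-dense subset of $X$. $hL(Z)=\sup\{L(Y):Y\subseteq Z\}$, where $L(Y)$ is the least cardinal $\kappa$ such that every open cover of $Y$ has a subcover of size at most $\kappa$. *)

(* Defs.v *)
From Stdlib Require Import Reals.
Open Scope R_scope.

Record RBanach := {
  carrier :> Type;
  vadd : carrier -> carrier -> carrier;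
  vopp : carrier -> carrier;
  vzero : carrier;
  vscal : R -> carrier -> carrier;
  vnorm : carrier -> R;
  vaddA : forall x y z, vadd x (vadd y z) = vadd (vadd x y) z;
  vaddC : forall x y, vadd x y = vadd y x;
  vadd0 : forall x, vadd x vzero = x;
  vaddN : forall x, vadd x (vopp x) = vzero;
  vscal1 : forall x, vscal 1 x = x;
  vscalA : forall a b x, vscal a (vscal b x) = vscal (a * b) x;
  vscalDr : forall a x y, vscal a (vadd x y) = vadd (vscal a x) (vscal a y);
  vscalDl : forall a b x, vscal (a + b) x = vadd (vscal a x) (vscal b x);
  vnorm_ge0 : forall x, 0 <= vnorm x;
  vnorm_eq0 : forall x, vnorm x = 0 -> x = vzero;
  vnormZ : forall a x, vnorm (vscal a x) = Rabs a * vnorm x;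
  vnorm_triangle : forall x y, vnorm (vadd x y) <= vnorm x + vnorm y;
  vcomplete : forall u : nat -> carrier,
    (forall eps, 0 < eps -> exists N, forall m n, (N <= m)%nat -> (N <= n)%nat ->
        vnorm (vadd (u m) (vopp (u n))) < eps) ->
    exists l, forall eps, 0 < eps -> exists N, forall n, (N <= n)%nat ->
        vnorm (vadd (u n) (vopp l)) < eps
}.

Arguments vadd {r}. Arguments vopp {r}. Arguments vzero {r}.
Arguments vscal {r}. Arguments vnorm {r}.

Fixpoint lincomb {X : RBanach} (n : nat) (c : nat -> R) (v : nat -> X) : X :=
  match n with
  | O => vzero
  | S m => vadd (lincomb m c v) (vscal (c m) (v m))
  end.

Definition infinite_dimensional (X : RBanach) : Prop :=
  forall n : nat, exists v : nat -> X, forall c : nat -> R,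
    lincomb n c v = vzero -> forall i, (i < n)%nat -> c i = 0.

Definition is_linear {X : RBanach} (f : X -> R) : Prop :=
  (forall x y, f (vadd x y) = f x + f y) /\ (forall a x, f (vscal a x) = a * f x).

(** Elements of the dual X^* : bounded (= continuous) linear functionals. *)
Definition in_dual {X : RBanach} (f : X -> R) : Prop :=
  is_linear f /\ exists C, forall x, Rabs (f x) <= C * vnorm x.

Definition in_dual_ball {X : RBanach} (f : X -> R) : Prop :=
  is_linear f /\ forall x, Rabs (f x) <= vnorm x.

Definition weak_star_open {X : RBanach} (U : (X -> R) -> Prop) : Prop :=
  forall f, in_dual f -> U f ->
    exists (n : nat) (xs : nat -> X) (eps : R), 0 < eps /\
      forall g, in_dual g ->
        (forall i, (i < n)%nat -> Rabs (g (xs i) - f (xs i)) < eps) -> U g.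

Definition card_le (A B : Type) : Prop := exists h : A -> B, forall a a', h a = h a' -> a = a'.

Definition sub (X : Type) (P : X -> Prop) : Type := {x : X | P x}.

Definition dense {X : RBanach} (D : X -> Prop) : Prop :=
  forall x eps, 0 < eps -> exists d, D d /\ vnorm (vadd x (vopp d)) < eps.

Definition dens_eq (X : RBanach) (I : Type) : Prop :=
  (exists D : X -> Prop, dense D /\ card_le (sub X D) I) /\
  (forall D : X -> Prop, dense D -> card_le I (sub X D)).

(** (I, lt) is a well order of order type an initial ordinal (a cardinal):
    strict total well-founded order whose proper initial segments have
    strictly smaller cardinality than I. *)
Definition initial_ordinal (I : Type) (lt : I -> I -> Prop) : Prop :=
  (forall a, ~ lt a a) /\
  (forall a b c, lt a b -> lt b c -> lt a c) /\
  (forall a b, lt a b \/ a = b \/ lt b a) /\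
  well_founded lt /\
  (forall i, ~ card_le I (sub I (fun j => lt j i))).

Definition lindelof_le {X : RBanach} (Y : (X -> R) -> Prop) (J : Type) : Prop :=
  forall (K : Type) (U : K -> (X -> R) -> Prop),
    (forall k, weak_star_open (U k)) ->
    (forall f, Y f -> exists k, U k f) ->
    exists S : K -> Prop, card_le (sub K S) J /\
      (forall f, Y f -> exists k, S k /\ U k f).

(** hL(B_{X^*}, weak^* ) = |I| where (I, lt) is an initial ordinal:
    hL <= |I| and no cardinal |J| < |I| bounds all L(Y). *)
Definition hL_dual_ball_eq (X : RBanach) (I : Type) : Prop :=
  (forall Y : (X -> R) -> Prop, (forall f, Y f -> in_dual_ball f) -> lindelof_le Y I) /\
  (forall J : Type, card_le J I -> ~ card_le I J ->
     exists Y : (X -> R) -> Prop, (forall f, Y f -> in_dual_ball f) /\ ~ lindelof_le Y J).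

(* Main.v *)
Require Import Defs.
From Stdlib Require Import Reals Lra Lia List Classical ClassicalEpsilon FunctionalExtensionality ProofIrrelevance Wf_nat Compare_dec Wellfounded ZArith.
Open Scope R_scope.


Lemma Rabs_m1 : Rabs (-1) = 1.
Proof. unfold Rabs; destruct Rcase_abs; lra. Qed.

Lemma vadd_cancel (X : RBanach) (a b c : X) : vadd a b = vadd a c -> b = c.
Proof.
  intros H. assert (E : vadd (vopp a) (vadd a b) = vadd (vopp a) (vadd a c)) by (rewrite H; reflexivity).
  rewrite !vaddA in E. rewrite (vaddC _ (vopp a) a), vaddN in E.
  rewrite (vaddC _ vzero b), (vaddC _ vzero c), !vadd0 in E. exact E.
Qed.

Lemma vadd0l (X : RBanach) (x : X) : vadd vzero x = x.
Proof. rewrite vaddC; apply vadd0. Qed.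

Lemma vscal0 (X : RBanach) (x : X) : vscal 0 x = vzero.
Proof.
  apply (vadd_cancel X (vscal 0 x)). rewrite vadd0, <- vscalDl. f_equal. ring.
Qed.

Lemma vscal0r (X : RBanach) (a : R) : vscal a (@vzero X) = vzero.
Proof.
  apply (vadd_cancel X (vscal a vzero)). rewrite vadd0, <- vscalDr, vadd0. reflexivity.
Qed.

Lemma vnorm0 (X : RBanach) : vnorm (@vzero X) = 0.
Proof. rewrite <- (vscal0 X vzero), vnormZ, Rabs_R0. ring. Qed.

Lemma vopp_scal (X : RBanach) (x : X) : vopp x = vscal (-1) x.
Proof.
  apply (vadd_cancel X x). rewrite vaddN. rewrite <- (vscal1 X x) at 1.
  rewrite <- vscalDl. replace (1 + -1) with 0 by ring. rewrite vscal0. reflexivity.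
Qed.

Lemma vnorm_opp (X : RBanach) (x : X) : vnorm (vopp x) = vnorm x.
Proof. rewrite vopp_scal, vnormZ. rewrite Rabs_m1. ring. Qed.

Definition vsub {X : RBanach} (x y : X) : X := vadd x (vopp y).

Lemma vsub_scal (X : RBanach) (x y : X) : vsub x y = vadd x (vscal (-1) y).
Proof. unfold vsub; rewrite vopp_scal; reflexivity. Qed.

Lemma vnorm_sub_sym (X : RBanach) (x y : X) : vnorm (vsub x y) = vnorm (vsub y x).
Proof.
  assert (E: vsub x y = vscal (-1) (vsub y x)).
  { rewrite !vsub_scal, vscalDr, vscalA. replace (-1 * -1) with 1 by ring. rewrite vscal1, vaddC. reflexivity. }
  rewrite E, vnormZ, Rabs_m1. ring.
Qed.

Lemma vsub_add (X : RBanach) (x y z : X) : vadd (vsub x y) (vsub y z) = vsub x z.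
Proof.
  unfold vsub. rewrite <- vaddA. f_equal. rewrite vaddA, (vaddC _ (vopp y) y), vaddN, vadd0l. reflexivity.
Qed.

Lemma vnorm_tri_sub (X : RBanach) (x y z : X) : vnorm (vsub x z) <= vnorm (vsub x y) + vnorm (vsub y z).
Proof. rewrite <- (vsub_add X x y z). apply vnorm_triangle. Qed.

Lemma vsub_eq0 (X : RBanach) (x y : X) : vnorm (vsub x y) = 0 -> x = y.
Proof.
  intros H. apply vnorm_eq0 in H. unfold vsub in H.
  assert (E: vadd (vadd x (vopp y)) y = vadd vzero y) by (rewrite H; reflexivity).
  rewrite <- vaddA, (vaddC _ (vopp y) y), vaddN, vadd0, vadd0l in E. exact E.
Qed.

Lemma vsub_self (X : RBanach) (x : X) : vsub x x = vzero.
Proof. apply vaddN. Qed.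

Lemma vsub_addadd (X : RBanach) (a b c d : X) : vsub (vadd a b) (vadd c d) = vadd (vsub a c) (vsub b d).
Proof.
  rewrite !vsub_scal, vscalDr.
  rewrite !vaddA. f_equal. rewrite <- !vaddA. f_equal. apply vaddC.
Qed.

Lemma vsub_scalscal (X : RBanach) (a : R) (x y : X) : vsub (vscal a x) (vscal a y) = vscal a (vsub x y).
Proof. rewrite !vsub_scal, vscalDr, !vscalA. f_equal. f_equal. ring. Qed.

Lemma vscal_opp (X : RBanach) (a : R) (x : X) : vscal (-a) x = vopp (vscal a x).
Proof. rewrite vopp_scal, vscalA. f_equal. ring. Qed.


Fixpoint gv {X : RBanach} (l : list (R * (X * R))) : X :=
  match l with nil => vzero | p :: l' => vadd (vscal (fst p) (fst (snd p))) (gv l') end.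
Fixpoint gr {X : RBanach} (l : list (R * (X * R))) : R :=
  match l with nil => 0 | p :: l' => fst p * snd (snd p) + gr l' end.
Definition gover {X : RBanach} (G : X -> R -> Prop) (l : list (R * (X * R))) : Prop :=
  Forall (fun p => G (fst (snd p)) (snd (snd p))) l.
Definition gbound {X : RBanach} (G : X -> R -> Prop) (C : R) : Prop :=
  forall l, gover G l -> Rabs (gr l) <= C * vnorm (gv l).
Definition gscale {X : RBanach} (a : R) (l : list (R * (X * R))) :=
  map (fun p => (a * fst p, snd p)) l.

Lemma gv_app (X : RBanach) (l1 l2 : list (R * (X * R))) : gv (l1 ++ l2) = vadd (gv l1) (gv l2).
Proof. induction l1 as [|p l1 IH]; simpl. rewrite vadd0l; auto. rewrite IH, vaddA; auto. Qed.
Lemma gr_app (X : RBanach) (l1 l2 : list (R * (X * R))) : gr (l1 ++ l2) = gr l1 + gr l2.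
Proof. induction l1 as [|p l1 IH]; simpl. ring. rewrite IH; ring. Qed.
Lemma gv_scale (X : RBanach) a (l : list (R * (X * R))) : gv (gscale a l) = vscal a (gv l).
Proof. induction l as [|p l IH]; simpl. rewrite vscal0r; auto. rewrite IH, vscalDr, vscalA; auto. Qed.
Lemma gr_scale (X : RBanach) a (l : list (R * (X * R))) : gr (gscale a l) = a * gr l.
Proof. induction l as [|p l IH]; simpl. ring. rewrite IH; ring. Qed.
Lemma gover_app (X : RBanach) G (l1 l2 : list (R * (X * R))) : gover G l1 -> gover G l2 -> gover G (l1 ++ l2).
Proof. unfold gover; intros; apply Forall_app; auto. Qed.
Lemma gover_scale (X : RBanach) G a (l : list (R * (X * R))) : gover G l -> gover G (gscale a l).
Proof. unfold gover, gscale; intros H. apply Forall_map. eapply Forall_impl; [|exact H]. simpl; auto. Qed.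
Lemma gover_mono (X : RBanach) (G G' : X -> R -> Prop) l : (forall w r, G w r -> G' w r) -> gover G l -> gover G' l.
Proof. unfold gover; intros H H1. eapply Forall_impl; [|exact H1]. intros; apply H; auto. Qed.

Lemma Rabs_le_both a b : a <= b -> - a <= b -> Rabs a <= b.
Proof. intros; unfold Rabs; destruct Rcase_abs; lra. Qed.

Lemma gsplit (X : RBanach) (G : X -> R -> Prop) y c l :
  gover (fun w r => G w r \/ (w = y /\ r = c)) l ->
  exists l' s, gover G l' /\ gv l = vadd (gv l') (vscal s y) /\ gr l = gr l' + s * c.
Proof.
  induction l as [|p l IH]; intros H.
  - exists nil, 0. split; [constructor|]. simpl. rewrite vscal0, vadd0. split; auto; ring.
  - inversion H as [|? ? Hp Hl]; subst. destruct (IH Hl) as (l' & s & H1 & H2 & H3).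
    destruct p as [t [w r]]; simpl in *. destruct Hp as [Hp | [-> ->]].
    + exists ((t,(w,r)) :: l'), s. split; [constructor; auto|]. simpl. rewrite H2, H3. split; [rewrite vaddA; auto|ring].
    + exists l', (t + s). split; auto. rewrite H2, H3, vscalDl. split; [|ring].
      rewrite vaddA, (vaddC _ (vscal t y) (gv l')), <- vaddA. reflexivity.
Qed.

Lemma vnorm_addsub (X : RBanach) (a b : X) : vnorm (vadd a b) = vnorm (vsub a (vopp b)).
Proof. unfold vsub. rewrite vopp_scal, vopp_scal, vscalA. replace (-1 * -1) with 1 by ring. rewrite vscal1; auto. Qed.

Lemma ose (X : RBanach) (G : X -> R -> Prop) (C : R) (y : X) :
  0 <= C -> gbound G C -> exists c, gbound (fun w r => G w r \/ (w = y /\ r = c)) C.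
Proof.
  intros HC HG.
  set (E := fun z => exists l, gover G l /\ z = - C * vnorm (vadd (gv l) y) - gr l).
  assert (Hb : forall l1 l2, gover G l1 -> gover G l2 ->
     - C * vnorm (vadd (gv l1) y) - gr l1 <= C * vnorm (vadd (gv l2) y) - gr l2).
  { intros l1 l2 H1 H2.
    assert (K := HG (l2 ++ gscale (-1) l1) (gover_app _ _ _ _ H2 (gover_scale _ _ _ _ H1))).
    rewrite gr_app, gv_app, gr_scale, gv_scale in K.
    assert (K2 : vnorm (vadd (gv l2) (vscal (-1) (gv l1))) <= vnorm (vadd (gv l2) y) + vnorm (vadd (gv l1) y)).
    { rewrite <- vsub_scal. rewrite (vnorm_addsub X (gv l2) y), (vnorm_addsub X (gv l1) y).
      rewrite (vnorm_sub_sym X (gv l1)). apply vnorm_tri_sub. }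
    assert (K3: gr l2 - gr l1 <= C * (vnorm (vadd (gv l2) y) + vnorm (vadd (gv l1) y))).
    { apply Rle_trans with (Rabs (gr l2 + -1 * gr l1)). replace (gr l2 - gr l1) with (gr l2 + -1 * gr l1) by ring. apply Rle_abs.
      eapply Rle_trans; [exact K|]. apply Rmult_le_compat_l; auto. }
    lra. }
  destruct (completeness E) as [c [Hc1 Hc2]].
  { exists (C * vnorm (vadd (gv (@nil (R * (X * R)))) y) - gr (@nil (R*(X*R)))).
    intros z [l [Hl ->]]. apply Hb; auto. constructor. }
  { exists (- C * vnorm (vadd (gv (@nil (R * (X * R)))) y) - gr (@nil (R*(X*R)))). exists nil. split; auto. constructor. }
  exists c.
  assert (Core : forall l, gover G l -> Rabs (gr l + c) <= C * vnorm (vadd (gv l) y)).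
  { intros l Hl. apply Rabs_le_both.
    - assert (c <= C * vnorm (vadd (gv l) y) - gr l).
      { apply Hc2. intros z [l1 [Hl1 ->]]. apply Hb; auto. }
      lra.
    - assert (- C * vnorm (vadd (gv l) y) - gr l <= c) by (apply Hc1; exists l; auto). lra. }
  intros l Hl. destruct (gsplit X G y c l Hl) as (l' & s & H1 & H2 & H3). rewrite H2, H3.
  destruct (Req_dec s 0) as [Hs|Hs].
  - subst s. rewrite vscal0, vadd0. replace (gr l' + 0 * c) with (gr l') by ring. apply HG; auto.
  - set (l'' := gscale (/ s) l').
    assert (Eg : gr l' + s * c = s * (gr l'' + c)).
    { unfold l''. rewrite gr_scale. field. auto. }
    assert (Ev : vadd (gv l') (vscal s y) = vscal s (vadd (gv l'') y)).
    { unfold l''. rewrite gv_scale, vscalDr, vscalA. replace (s * / s) with 1 by (field; auto). rewrite vscal1; auto. }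
    rewrite Eg, Ev, vnormZ, Rabs_mult.
    replace (C * (Rabs s * vnorm (vadd (gv l'') y))) with (Rabs s * (C * vnorm (vadd (gv l'') y))) by ring.
    apply Rmult_le_compat_l. apply Rabs_pos. apply Core. apply gover_scale; auto.
Qed.


Lemma small_zero a K : 0 <= K -> (forall eps, 0 < eps -> Rabs a <= K * eps) -> a = 0.
Proof.
  intros HK H. destruct (Req_dec a 0) as [|Ha]; auto. exfalso.
  assert (Hp : 0 < Rabs a) by (apply Rabs_pos_lt; auto).
  specialize (H (Rabs a / (2 * (K + 1))) ltac:(apply Rdiv_lt_0_compat; lra)).
  assert (K * (Rabs a / (2 * (K + 1))) < Rabs a).
  { unfold Rdiv. replace (K * (Rabs a * / (2 * (K + 1)))) with (Rabs a * (K / (2 * (K+1)))) by (field; lra).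
    rewrite <- (Rmult_1_r (Rabs a)) at 2. apply Rmult_lt_compat_l; auto.
    apply (Rmult_lt_reg_r (2 * (K+1))); [lra|]. unfold Rdiv. rewrite Rmult_assoc, Rinv_l; lra. }
  lra.
Qed.

Lemma Rabs3 a b c : Rabs (a - b - c) <= Rabs a + Rabs b + Rabs c.
Proof. unfold Rabs; repeat destruct Rcase_abs; lra. Qed.
Lemma Rabs2m a b : Rabs (a - b) <= Rabs a + Rabs b.
Proof. unfold Rabs; repeat destruct Rcase_abs; lra. Qed.

Lemma norm_gv_le (X : RBanach) (x : X) l : vnorm (gv l) <= vnorm x + vnorm (vsub x (gv l)).
Proof.
  assert (E: gv l = vsub x (vsub x (gv l))).
  { unfold vsub. rewrite !vopp_scal, vscalDr, vscalA. replace (-1 * -1) with 1 by ring.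
    rewrite vscal1, vaddA, <- vopp_scal, vaddN, vadd0l. auto. }
  rewrite E at 1. unfold vsub at 1. eapply Rle_trans; [apply vnorm_triangle|]. rewrite vnorm_opp. lra.
Qed.

Lemma den_ext (X : RBanach) (H : X -> R -> Prop) (C : R) :
  0 <= C -> gbound H C ->
  (forall x eps, 0 < eps -> exists l, gover H l /\ vnorm (vsub x (gv l)) < eps) ->
  exists F : X -> R, in_dual F /\ forall w r, H w r -> F w = r.
Proof.
  intros HC HB Hd.
  set (Ex := fun (x : X) z => exists l, gover H l /\ z = gr l - C * vnorm (vsub x (gv l))).
  assert (bnd : forall x, bound (Ex x)).
  { intros x. exists (C * vnorm x). intros z [l [Hl ->]].
    assert (K := HB l Hl). assert (K2 := norm_gv_le X x l).
    assert (gr l <= C * vnorm (gv l)) by (eapply Rle_trans; [apply Rle_abs|exact K]).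
    assert (C * vnorm (gv l) <= C * (vnorm x + vnorm (vsub x (gv l)))) by (apply Rmult_le_compat_l; auto).
    lra. }
  assert (ne : forall x, exists z, Ex x z).
  { intros x. exists (gr (@nil (R*(X*R))) - C * vnorm (vsub x (gv (@nil (R*(X*R)))))). exists nil; split; auto. constructor. }
  set (F := fun x => proj1_sig (completeness (Ex x) (bnd x) (ne x))).
  assert (Fc : forall x l, gover H l -> Rabs (F x - gr l) <= C * vnorm (vsub x (gv l))).
  { intros x l Hl. unfold F. destruct (completeness (Ex x) (bnd x) (ne x)) as [m [Hm1 Hm2]]. simpl.
    apply Rabs_le_both.
    - assert (m <= gr l + C * vnorm (vsub x (gv l))); [|lra].
      apply Hm2. intros z [l' [Hl' ->]].
      assert (K := HB (l' ++ gscale (-1) l) (gover_app _ _ _ _ Hl' (gover_scale _ _ _ _ Hl))).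
      rewrite gr_app, gv_app, gr_scale, gv_scale, <- vsub_scal in K.
      assert (K2 : vnorm (vsub (gv l') (gv l)) <= vnorm (vsub x (gv l')) + vnorm (vsub x (gv l))).
      { rewrite (vnorm_sub_sym X x (gv l')). apply vnorm_tri_sub. }
      assert (gr l' - gr l <= C * (vnorm (vsub x (gv l')) + vnorm (vsub x (gv l)))).
      { replace (gr l' - gr l) with (gr l' + -1 * gr l) by ring. eapply Rle_trans; [apply Rle_abs|].
        eapply Rle_trans; [exact K|]. apply Rmult_le_compat_l; auto. }
      lra.
    - assert (gr l - C * vnorm (vsub x (gv l)) <= m) by (apply Hm1; exists l; auto). lra. }
  exists F. split; [split; [split|]|].
  -
    intros x y. apply Rminus_diag_uniq. apply (small_zero _ (4 * C)). lra.
    intros eps Heps. destruct (Hd x eps Heps) as [l1 [H1 N1]]. destruct (Hd y eps Heps) as [l2 [H2 N2]].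
    assert (A1 := Fc x l1 H1). assert (A2 := Fc y l2 H2).
    assert (A3 := Fc (vadd x y) (l1 ++ l2) (gover_app _ _ _ _ H1 H2)).
    rewrite gr_app, gv_app, vsub_addadd in A3.
    assert (vnorm (vadd (vsub x (gv l1)) (vsub y (gv l2))) <= 2 * eps) by (eapply Rle_trans; [apply vnorm_triangle|lra]).
    assert (C * vnorm (vadd (vsub x (gv l1)) (vsub y (gv l2))) <= C * (2 * eps)) by (apply Rmult_le_compat_l; auto).
    assert (C * vnorm (vsub x (gv l1)) <= C * eps) by (apply Rmult_le_compat_l; lra).
    assert (C * vnorm (vsub y (gv l2)) <= C * eps) by (apply Rmult_le_compat_l; lra).
    replace (F (vadd x y) - (F x + F y)) with ((F (vadd x y) - (gr l1 + gr l2)) - (F x - gr l1) - (F y - gr l2)) by ring.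
    eapply Rle_trans; [apply Rabs3|]. lra.
  - intros a x. apply Rminus_diag_uniq. apply (small_zero _ (2 * Rabs a * C)).
    assert (0 <= Rabs a) by apply Rabs_pos. apply Rmult_le_pos; lra.
    intros eps Heps. destruct (Hd x eps Heps) as [l [Hl N]].
    assert (A1 := Fc x l Hl). assert (A2 := Fc (vscal a x) (gscale a l) (gover_scale _ _ _ _ Hl)).
    rewrite gr_scale, gv_scale, vsub_scalscal, vnormZ in A2.
    replace (F (vscal a x) - a * F x) with ((F (vscal a x) - a * gr l) - a * (F x - gr l)) by ring.
    eapply Rle_trans; [apply Rabs2m|]. rewrite Rabs_mult.
    assert (0 <= Rabs a) by apply Rabs_pos.
    assert (Rabs a * Rabs (F x - gr l) <= Rabs a * (C * eps)).
    { apply Rmult_le_compat_l; auto. eapply Rle_trans; [exact A1|]. apply Rmult_le_compat_l; lra. }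
    assert (C * (Rabs a * vnorm (vsub x (gv l))) <= C * (Rabs a * eps)).
    { apply Rmult_le_compat_l; auto. apply Rmult_le_compat_l; lra. }
    nra.
  - exists C. intros x. assert (K := Fc x nil ltac:(constructor)). simpl in K.
    unfold vsub in K.
    assert (E: vopp (@vzero X) = vzero) by (rewrite vopp_scal, vscal0r; auto). rewrite E, vadd0 in K.
    replace (F x - 0) with (F x) in K by ring. exact K.
  - intros w r Hwr. assert (K := Fc w ((1,(w,r)) :: nil) ltac:(constructor; [exact Hwr|constructor])).
    simpl in K. rewrite vscal1, vadd0, vsub_self, vnorm0 in K.
    replace (1 * r + 0) with r in K by ring.
    assert (0 <= Rabs (F w - r)) by apply Rabs_pos.
    assert (Rabs (F w - r) = 0) by nra. apply Rminus_diag_uniq. destruct (Req_dec (F w - r) 0); auto.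
    exfalso. assert (0 < Rabs (F w - r)) by (apply Rabs_pos_lt; auto). lra.
Qed.


Lemma list_maxI (I : Type) (lt : I -> I -> Prop) :
  (forall a b, lt a b \/ a = b \/ lt b a) -> (forall a b c, lt a b -> lt b c -> lt a c) ->
  forall ks : list I, ks <> nil -> exists m, In m ks /\ forall k, In k ks -> lt k m \/ k = m.
Proof.
  intros Htri Htr ks. induction ks as [|a ks IH]; intros Hne; [congruence|].
  destruct ks as [|b ks'].
  - exists a. split; [left; auto|]. intros k Hk; destruct Hk as [Hk|Hk]; [subst; auto|destruct Hk].
  - destruct IH as [m [Hm1 Hm2]]; [congruence|].
    destruct (Htri a m) as [H|[H|H]].
    + exists m. split; [right; auto|]. intros k [<-|Hk]; auto.
    + subst. exists m. split; [left; auto|]. intros k [<-|Hk]; auto.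
    + exists a. split; [left; auto|]. intros k [<-|Hk]; auto. destruct (Hm2 k Hk) as [H'| ->]; auto. left; eauto.
Qed.

Definition Gp {X : RBanach} {I : Type} (D : X -> Prop) (e : sub X D -> I) (g : I -> R)
  (G : X -> R -> Prop) (P : I -> Prop) : X -> R -> Prop :=
  fun w r => G w r \/ exists d, P (e d) /\ w = proj1_sig d /\ r = g (e d).

Lemma collect (X : RBanach) (I : Type) D e g G (P : I -> Prop) (l : list (R * (X * R))) :
  gover (@Gp X I D e g G P) l -> exists ks, (forall k, In k ks -> P k) /\ gover (Gp D e g G (fun k => In k ks)) l.
Proof.
  induction l as [|p l IH]; intros H.
  - exists nil. split; [intros _ []|constructor].
  - inversion H as [|? ? Hp Hl]; subst. destruct (IH Hl) as [ks [K1 K2]].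
    destruct Hp as [Hp | [d [Pd [Hw Hr]]]].
    + exists ks. split; auto. constructor; [left; auto|auto].
    + exists (e d :: ks). split.
      * intros k [<-|Hk]; auto.
      * constructor. right. exists d. split; [left; auto|auto].
        eapply gover_mono; [|exact K2]. intros w r [A|[d' [B1 B2]]]; [left; auto|right; exists d'; split; [right|]; auto].
Qed.

Lemma gbound_via_max (X : RBanach) (I : Type) (lt : I -> I -> Prop) D e g G C (P : I -> Prop) :
  (forall a b, lt a b \/ a = b \/ lt b a) -> (forall a b c, lt a b -> lt b c -> lt a c) ->
  gbound G C ->
  (forall m, P m -> gbound (@Gp X I D e g G (fun k => lt k m \/ k = m)) C) ->
  gbound (Gp D e g G P) C.
Proof.
  intros Htri Htr HG Hm l Hl. destruct (collect X I D e g G P l Hl) as [ks [K1 K2]].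
  destruct ks as [|k0 ks'].
  - apply HG. eapply gover_mono; [|exact K2]. intros w r [A|[d [[] _]]]; auto.
  - destruct (list_maxI I lt Htri Htr (k0 :: ks') ltac:(congruence)) as [m [Hm1 Hm2]].
    apply (Hm m (K1 m Hm1)). eapply gover_mono; [|exact K2].
    intros w r [A|[d [B1 B2]]]; [left; auto|right; exists d; split; auto].
Qed.

Lemma hb (X : RBanach) (I : Type) (lt : I -> I -> Prop) (D : X -> Prop) (e : sub X D -> I)
  (G : X -> R -> Prop) (C : R) :
  well_founded lt -> (forall a b, lt a b \/ a = b \/ lt b a) -> (forall a b c, lt a b -> lt b c -> lt a c) ->
  dense D -> (forall a b, e a = e b -> a = b) -> 0 <= C -> gbound G C ->
  exists F, in_dual F /\ forall w r, G w r -> F w = r.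
Proof.
  intros Hwf Htri Htr HD He HC HG.
  set (Fs := fun i (rec : forall j, lt j i -> R) =>
    epsilon (inhabits 0) (fun c => gbound (fun w r => G w r \/
        (exists d j (H : lt j i), e d = j /\ w = proj1_sig d /\ r = rec j H) \/
        (exists d, e d = i /\ w = proj1_sig d /\ r = c)) C)).
  set (g := Fix Hwf (fun _ => R) Fs).
  assert (Hg : forall i, g i = Fs i (fun j _ => g j)).
  { intros i. unfold g.
    assert (ext : forall x (f1 f2 : forall y, lt y x -> R), (forall y p, f1 y p = f2 y p) -> Fs x f1 = Fs x f2).
    { intros x f1 f2 Hf.
      assert (f1 = f2) by (apply functional_extensionality_dep; intros y; apply functional_extensionality_dep; auto).
      subst; auto. }
    exact (Fix_eq Hwf (fun _ => R) Fs ext i). }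
  assert (Main : forall i, gbound (Gp D e g G (fun k => lt k i \/ k = i)) C).
  { intros i. induction i as [i IH] using (well_founded_induction Hwf).
    assert (Hlt : gbound (Gp D e g G (fun k => lt k i)) C).
    { apply (gbound_via_max X I lt D e g G C); auto. }
    assert (Spec : gbound (fun w r => G w r \/
        (exists d j (H : lt j i), e d = j /\ w = proj1_sig d /\ r = g j) \/
        (exists d, e d = i /\ w = proj1_sig d /\ r = g i)) C).
    { rewrite (Hg i). unfold Fs. apply epsilon_spec.
      destruct (classic (exists d, e d = i)) as [[d0 Hd0]|Hnd].
      - destruct (ose X (Gp D e g G (fun k => lt k i)) C (proj1_sig d0) HC Hlt) as [c Hc].
        exists c. intros l Hl. apply Hc. eapply gover_mono; [|exact Hl].
        intros w r [A|[[d [j [H [B1 [B2 B3]]]]]|[d [B1 [B2 B3]]]]].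
        + left; left; auto.
        + left; right. exists d. subst. auto.
        + right. assert (d = d0) by (apply He; congruence). subst; auto.
      - exists 0. intros l Hl. apply Hlt. eapply gover_mono; [|exact Hl].
        intros w r [A|[[d [j [H [B1 [B2 B3]]]]]|[d [B1 [B2 B3]]]]].
        + left; auto.
        + right. exists d. subst. auto.
        + exfalso; apply Hnd; eauto. }
    intros l Hl. apply Spec. eapply gover_mono; [|exact Hl].
    intros w r [A|[d [[B|B] [B2 B3]]]].
    + left; auto.
    + right; left. exists d, (e d), B. auto.
    + right; right. exists d. subst. auto. }
  assert (All : gbound (Gp D e g G (fun _ => True)) C).
  { apply (gbound_via_max X I lt D e g G C); auto. }
  destruct (den_ext X (Gp D e g G (fun _ => True)) C HC All) as [F [HF1 HF2]].
  - intros x eps Heps. destruct (HD x eps Heps) as [d [Dd Hd]].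
    exists ((1, (d, g (e (exist _ d Dd)))) :: nil). split.
    + constructor; [|constructor]. right. exists (exist _ d Dd). simpl. auto.
    + simpl. rewrite vscal1, vadd0. exact Hd.
  - exists F. split; auto. intros w r Hwr. apply HF2. left; auto.
Qed.


Fixpoint rsum (n : nat) (f : nat -> R) : R := match n with O => 0 | S n => rsum n f + f n end.

Lemma rsum_ext n f g : (forall i, (i < n)%nat -> f i = g i) -> rsum n f = rsum n g.
Proof. induction n; simpl; intros H; auto. rewrite IHn, H; auto. Qed.
Lemma rsum_plus n f g : rsum n (fun i => f i + g i) = rsum n f + rsum n g.
Proof. induction n; simpl; [ring|rewrite IHn; ring]. Qed.
Lemma rsum_scal n a f : rsum n (fun i => a * f i) = a * rsum n f.
Proof. induction n; simpl; [ring|rewrite IHn; ring]. Qed.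
Lemma rsum_zero n : rsum n (fun _ => 0) = 0.
Proof. induction n; simpl; [ring|rewrite IHn; ring]. Qed.
Lemma rsum_delta n k t : (k < n)%nat -> rsum n (fun i => if Nat.eq_dec i k then t else 0) = t.
Proof.
  induction n; intros H; [lia|]. simpl. destruct (Nat.eq_dec n k).
  - subst. rewrite (rsum_ext _ _ (fun _ => 0)), rsum_zero. ring.
    intros i Hi. destruct (Nat.eq_dec i k); [lia|auto].
  - rewrite IHn; [ring|lia].
Qed.

Lemma lincomb_ext (X : RBanach) n c c' (v : nat -> X) : (forall i, (i < n)%nat -> c i = c' i) -> lincomb n c v = lincomb n c' v.
Proof. induction n; simpl; intros H; auto. rewrite IHn, H; auto. Qed.
Lemma lincomb_add (X : RBanach) n c d (v : nat -> X) :
  lincomb n (fun i => c i + d i) v = vadd (lincomb n c v) (lincomb n d v).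
Proof.
  induction n; simpl. rewrite vadd0; auto.
  rewrite IHn, vscalDl. rewrite <- !vaddA. f_equal. rewrite !vaddA. f_equal. apply vaddC.
Qed.
Lemma lincomb_scal (X : RBanach) n a c (v : nat -> X) : lincomb n (fun i => a * c i) v = vscal a (lincomb n c v).
Proof. induction n; simpl. rewrite vscal0r; auto. rewrite IHn, vscalDr, vscalA; auto. Qed.
Lemma lincomb_zero (X : RBanach) n (v : nat -> X) : lincomb n (fun _ => 0) v = vzero.
Proof. induction n; simpl; auto. rewrite IHn, vscal0, vadd0; auto. Qed.

Lemma lincomb_compose (X : RBanach) n m c (v w : nat -> X) (B : nat -> nat -> R) :
  (forall i, (i < n)%nat -> v i = lincomb m (B i) w) ->
  lincomb n c v = lincomb m (fun j => rsum n (fun i => c i * B i j)) w.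
Proof.
  induction n; intros H; simpl. rewrite lincomb_zero; auto.
  rewrite IHn by (intros; apply H; lia). rewrite H by lia.
  rewrite <- lincomb_scal, <- lincomb_add. auto.
Qed.

Lemma LA : forall m (B : nat -> nat -> R), exists c : nat -> R,
  (exists i, (i <= m)%nat /\ c i <> 0) /\ forall j, (j < m)%nat -> rsum (S m) (fun i => c i * B i j) = 0.
Proof.
  induction m as [|m IH]; intros B.
  - exists (fun _ => 1). split; [exists 0%nat; split; [lia|lra]|intros; lia].
  -
    assert (CA : forall B : nat -> nat -> R, B (S m) m <> 0 -> exists c : nat -> R,
      (exists i, (i <= S m)%nat /\ c i <> 0) /\ forall j, (j < S m)%nat -> rsum (S (S m)) (fun i => c i * B i j) = 0).
    { clear B. intros B Ha.
      destruct (IH (fun i j => B i j - B i m / B (S m) m * B (S m) j)) as [c' [[i0 [Hi0 Hc0]] Hc']].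
      set (K := - rsum (S m) (fun i => c' i * B i m) / B (S m) m).
      exists (fun i => if Nat.leb i m then c' i else K). split.
      - exists i0. split; [lia|]. destruct (Nat.leb_spec i0 m); [auto|lia].
      - intros j Hj. change (rsum (S (S m)) ?f) with (rsum (S m) f + f (S m)); cbv beta.
        rewrite (rsum_ext _ _ (fun i => c' i * B i j)) by (intros i Hi; destruct (Nat.leb_spec i m); [auto|lia]).
        destruct (Nat.leb_spec (S m) m); [lia|]. unfold K.
        destruct (Nat.eq_dec j m) as [->|Hjm].
        + field. auto.
        + assert (E := Hc' j ltac:(lia)).
          rewrite (rsum_ext _ _ (fun i => c' i * B i j + (- (B (S m) j / B (S m) m)) * (c' i * B i m))) in E
            by (intros; field; auto).
          rewrite rsum_plus, rsum_scal in E. rewrite <- E. field. auto. }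
    destruct (Req_dec (B (S m) m) 0) as [Ha|Ha]; [|apply CA; auto].
    destruct (classic (exists k, (k <= m)%nat /\ B k m <> 0)) as [[k [Hk Hbk]]|Hn].
    +
      destruct (CA (fun i j => if Nat.eq_dec i (S m) then B (S m) j + B k j else B i j)) as [c'' [[i0 [Hi0 Hc0]] Hc'']].
      { destruct (Nat.eq_dec (S m) (S m)); [|lia]. rewrite Ha. lra. }
      exists (fun i => if Nat.eq_dec i (S m) then c'' (S m) else c'' i + (if Nat.eq_dec i k then c'' (S m) else 0)).
      split.
      * destruct (Req_dec (c'' (S m)) 0) as [Hz|Hz].
        -- exists i0. assert (i0 <> S m) by (intro; subst; auto). split; auto.
           destruct (Nat.eq_dec i0 (S m)); [lia|]. destruct (Nat.eq_dec i0 k); rewrite ?Hz; lra.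
        -- exists (S m). split; auto. destruct (Nat.eq_dec (S m) (S m)); [auto|lia].
      * intros j Hj. etransitivity; [|exact (Hc'' j Hj)]. change (rsum (S (S m)) ?f) with (rsum (S m) f + f (S m)); cbv beta.
        destruct (Nat.eq_dec (S m) (S m)); [|lia].
        rewrite (rsum_ext _ _ (fun i => c'' i * B i j + (if Nat.eq_dec i k then c'' (S m) * B k j else 0))).
        rewrite rsum_plus, rsum_delta by lia.
        rewrite (rsum_ext (S m) (fun i => c'' i * (if Nat.eq_dec i (S m) then B (S m) j + B k j else B i j)) (fun i => c'' i * B i j)).
        destruct (Nat.eq_dec (S m) (S m)); [|lia]. ring.
        intros i Hi; destruct (Nat.eq_dec i (S m)); [lia|auto].
        intros i Hi; destruct (Nat.eq_dec i (S m)); [lia|]. destruct (Nat.eq_dec i k); [subst; ring|ring].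
    +
      destruct (IH B) as [c' [[i0 [Hi0 Hc0]] Hc']].
      exists (fun i => if Nat.leb i m then c' i else 0). split.
      * exists i0. split; [lia|]. destruct (Nat.leb_spec i0 m); [auto|lia].
      * intros j Hj. change (rsum (S (S m)) ?f) with (rsum (S m) f + f (S m)); cbv beta.
        destruct (Nat.leb_spec (S m) m); [lia|].
        rewrite (rsum_ext _ _ (fun i => c' i * B i j)) by (intros i Hi; destruct (Nat.leb_spec i m); [auto|lia]).
        destruct (Nat.eq_dec j m) as [->|Hjm].
        -- rewrite (rsum_ext _ _ (fun _ => 0)). rewrite rsum_zero; ring.
           intros i Hi. destruct (Req_dec (B i m) 0) as [->|Hb]; [ring|exfalso; apply Hn; exists i; split; [lia|auto]].
        -- rewrite Hc' by lia. ring.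
Qed.

Lemma steinitz (X : RBanach) m (v w : nat -> X) :
  (forall i, (i <= m)%nat -> exists b, v i = lincomb m b w) ->
  exists c, (exists i, (i <= m)%nat /\ c i <> 0) /\ lincomb (S m) c v = vzero.
Proof.
  intros H. set (B := fun i => epsilon (inhabits (fun _ : nat => 0)) (fun b => v i = lincomb m b w)).
  assert (HB : forall i, (i < S m)%nat -> v i = lincomb m (B i) w).
  { intros i Hi. unfold B. apply epsilon_spec. apply H; lia. }
  destruct (LA m B) as [c [Hc1 Hc2]]. exists c. split; auto.
  rewrite (lincomb_compose X (S m) m c v w B HB). rewrite (lincomb_ext _ _ _ (fun _ => 0)).
  apply lincomb_zero. auto.
Qed.

Lemma not_in_span (X : RBanach) m (w : nat -> X) : infinite_dimensional X ->
  exists z, ~ exists b, z = lincomb m b w.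
Proof.
  intros Hinf. destruct (Hinf (S m)) as [v Hv].
  apply NNPP. intros Hn.
  assert (H : forall i, (i <= m)%nat -> exists b, v i = lincomb m b w).
  { intros i _. apply NNPP. intro H'. apply Hn. exists (v i). auto. }
  destruct (steinitz X m v w H) as [c [[i [Hi Hci]] Hc]].
  apply Hci. apply (Hv c Hc). lia.
Qed.


Lemma inv_small eps : 0 < eps -> exists N, forall k, (N <= k)%nat -> / (INR k + 1) < eps.
Proof.
  intros H. destruct (archimed_cor1 eps H) as [N [H1 H2]]. exists N. intros k Hk.
  apply Rle_lt_trans with (/ INR N); auto. apply Rinv_le_contravar.
  apply lt_0_INR; auto. apply le_INR in Hk. lra.
Qed.

Lemma vsub_lincomb (X : RBanach) m c d (v : nat -> X) :
  vsub (lincomb m c v) (lincomb m d v) = lincomb m (fun i => c i - d i) v.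
Proof.
  rewrite vsub_scal, <- lincomb_scal, <- lincomb_add. apply lincomb_ext. intros; ring.
Qed.

Lemma vsub_vadd (X : RBanach) (x a b : X) : vsub x (vadd a b) = vsub (vsub x b) a.
Proof. rewrite !vsub_scal, vscalDr, vaddA, <- (vaddA _ x), (vaddC _ (vscal (-1) a)), vaddA. auto. Qed.

Lemma vsub_eq (X : RBanach) (x a b : X) : vsub x a = b -> x = vadd b a.
Proof. intros <-. unfold vsub. rewrite <- vaddA, (vaddC _ (vopp a)), vaddN, vadd0. auto. Qed.

Lemma vsub0 (X : RBanach) (x : X) : vsub x vzero = x.
Proof. unfold vsub. rewrite vopp_scal, vscal0r, vadd0. auto. Qed.

Lemma alg1 (X : RBanach) (x y M : X) T tk :
  vsub (vsub x (vscal T y)) M = vadd (vsub x (vadd M (vscal tk y))) (vscal (tk - T) y).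
Proof.
  unfold vsub. rewrite !vopp_scal, !vscalDr, !vscalA.
  rewrite (vaddA _ x (vscal (-1) M)), <- (vaddA _ (vadd x (vscal (-1) M))), <- vscalDl.
  rewrite <- (vaddA _ x), (vaddC _ (vscal (-1 * T) y)), vaddA. f_equal. f_equal. ring.
Qed.

Lemma frac_le a b : 0 < a -> 0 <= b -> a / (2 * (b + 1)) * b <= a / 2.
Proof.
  intros. replace (a / (2 * (b + 1)) * b) with (a / 2 - a / (2 * (b + 1))) by (field; lra).
  assert (0 < a / (2 * (b + 1))) by (apply Rdiv_lt_0_compat; lra). lra.
Qed.

Lemma closed_span (X : RBanach) n (v : nat -> X) : forall x,
  (forall eps, 0 < eps -> exists c, vnorm (vsub x (lincomb n c v)) < eps) -> exists c, x = lincomb n c v.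
Proof.
  induction n as [|n IH]; intros x Hx.
  - exists (fun _ => 0). simpl. apply vsub_eq0. rewrite vsub0 in *.
    destruct (Req_dec (vnorm x) 0) as [|Hn]; auto. exfalso.
    assert (0 < vnorm x) by (assert (0 <= vnorm x) by apply vnorm_ge0; lra).
    destruct (Hx (vnorm x) H) as [c Hc]. simpl in Hc. rewrite vsub0 in Hc. lra.
  - destruct (classic (exists b, v n = lincomb n b v)) as [[b Hb]|Hnb].
    + destruct (IH x) as [c' Hc'].
      { intros eps Heps. destruct (Hx eps Heps) as [c Hc]. exists (fun i => c i + c n * b i).
        simpl in Hc. rewrite Hb, <- lincomb_scal, <- lincomb_add in Hc. exact Hc. }
      exists (fun i => if Nat.eq_dec i n then 0 else c' i). simpl.
      destruct (Nat.eq_dec n n); [|lia]. rewrite vscal0, vadd0. rewrite Hc'. apply lincomb_ext.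
      intros i Hi. destruct (Nat.eq_dec i n); [lia|auto].
    + assert (Hd : exists d, 0 < d /\ forall c, d <= vnorm (vsub (v n) (lincomb n c v))).
      { apply NNPP. intros Hn. apply Hnb. apply IH. intros eps Heps. apply NNPP. intros Hn2.
        apply Hn. exists eps. split; auto. intros c. apply Rnot_lt_le. intros Hc. apply Hn2. exists c; auto. }
      destruct Hd as [d [Hd0 Hd]].
      assert (Low : forall c, Rabs (c n) * d <= vnorm (lincomb (S n) c v)).
      { intros c. destruct (Req_dec (c n) 0) as [Hz|Hz].
        - rewrite Hz, Rabs_R0. rewrite Rmult_0_l. apply vnorm_ge0.
        - assert (E : lincomb (S n) c v = vscal (c n) (vsub (v n) (lincomb n (fun i => - c i / c n) v))).
          { simpl. rewrite vsub_scal, vscalDr, <- !lincomb_scal, vaddC. f_equal. apply lincomb_ext. intros; field; auto. }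
          rewrite E, vnormZ. apply Rmult_le_compat_l; [apply Rabs_pos|apply Hd]. }
      set (ck := fun k : nat => epsilon (inhabits (fun _ : nat => 0))
                   (fun c => vnorm (vsub x (lincomb (S n) c v)) < / (INR k + 1))).
      assert (Hck : forall k, vnorm (vsub x (lincomb (S n) (ck k) v)) < / (INR k + 1)).
      { intros k. unfold ck. apply epsilon_spec. apply Hx. apply Rinv_0_lt_compat. assert (0 <= INR k) by apply pos_INR. lra. }
      set (t := fun k => ck k n).
      assert (Hcau : Cauchy_crit t).
      { intros eps Heps. assert (Hp : 0 < eps * d / 2) by nra. destruct (inv_small _ Hp) as [N HN].
        exists N. intros k m Hk Hm. unfold Rdist.
        assert (K1 := Low (fun i => ck k i - ck m i)). cbv beta in K1.
        rewrite <- (vsub_lincomb X (S n) (ck k) (ck m) v) in K1.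
        assert (K2 := vnorm_tri_sub X (lincomb (S n) (ck k) v) x (lincomb (S n) (ck m) v)).
        rewrite (vnorm_sub_sym X (lincomb (S n) (ck k) v) x) in K2.
        assert (K3 := Hck k). assert (K4 := Hck m). assert (K5 := HN k Hk). assert (K6 := HN m Hm).
        unfold t. apply (Rmult_lt_reg_r d); auto. lra. }
      destruct (R_complete t Hcau) as [T HT].
      destruct (IH (vsub x (vscal T (v n)))) as [c' Hc'].
      { intros eps Heps.
        assert (Hp : 0 < eps / 2) by lra. destruct (inv_small _ Hp) as [N1 HN1].
        destruct (HT (eps / (2 * (vnorm (v n) + 1)))) as [N2 HN2].
        { assert (0 <= vnorm (v n)) by apply vnorm_ge0. apply Rdiv_lt_0_compat; lra. }
        set (k := Nat.max N1 N2). exists (ck k).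
        assert (E : vsub (vsub x (vscal T (v n))) (lincomb n (ck k) v) =
                    vadd (vsub x (lincomb (S n) (ck k) v)) (vscal (t k - T) (v n))).
        { simpl. apply alg1. }
        rewrite E. eapply Rle_lt_trans; [apply vnorm_triangle|]. rewrite vnormZ.
        assert (K1 := Hck k). assert (K2 := HN1 k ltac:(lia)). assert (K3 := HN2 k ltac:(lia)).
        unfold Rdist in K3. assert (0 <= vnorm (v n)) by apply vnorm_ge0.
        assert (Rabs (t k - T) * vnorm (v n) <= eps / (2 * (vnorm (v n) + 1)) * vnorm (v n)) by (apply Rmult_le_compat_r; lra).
        assert (eps / (2 * (vnorm (v n) + 1)) * vnorm (v n) <= eps / 2).
        { apply frac_le; lra. }
        lra. }
      exists (fun i => if Nat.eq_dec i n then T else c' i).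
      apply vsub_eq in Hc'. rewrite Hc'. simpl. destruct (Nat.eq_dec n n); [|lia]. f_equal.
      apply lincomb_ext. intros i Hi. destruct (Nat.eq_dec i n); [lia|auto].
Qed.

Close Scope R_scope.

Lemma cl_refl A : card_le A A.
Proof. exists (fun a => a); auto. Qed.
Lemma cl_trans A B C : card_le A B -> card_le B C -> card_le A C.
Proof. intros [f Hf] [g Hg]. exists (fun a => g (f a)); auto. Qed.
Lemma cl_prod A A' B B' : card_le A A' -> card_le B B' -> card_le (A * B) (A' * B').
Proof. intros [f Hf] [g Hg]. exists (fun p => (f (fst p), g (snd p))). intros [a b] [a' b'] H; simpl in H.
  inversion H. f_equal; auto. Qed.
Lemma cl_option A B : card_le A B -> card_le (option A) (option B).
Proof. intros [f Hf]. exists (fun o => match o with None => None | Some a => Some (f a) end).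
  intros [a|] [b|] H; try discriminate; auto. inversion H. f_equal; auto. Qed.
Lemma cl_list A B : card_le A B -> card_le (list A) (list B).
Proof. intros [f Hf]. exists (map f). intros l; induction l as [|a l IH]; intros [|b l'] H; try discriminate; auto.
  simpl in H. inversion H. f_equal; auto. Qed.
Lemma sub_eq T (P : T -> Prop) (a b : sub T P) : proj1_sig a = proj1_sig b -> a = b.
Proof. destruct a, b; simpl; intros ->. f_equal. apply proof_irrelevance. Qed.
Lemma cl_sub T (P Q : T -> Prop) : (forall x, P x -> Q x) -> card_le (sub T P) (sub T Q).
Proof. intros H. exists (fun a => exist _ (proj1_sig a) (H _ (proj2_sig a))). intros a b E.
  apply sub_eq. apply (f_equal (@proj1_sig _ _)) in E. auto. Qed.
Lemma cl_sub_full T (P : T -> Prop) : card_le (sub T P) T.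
Proof. exists (@proj1_sig _ _). apply sub_eq. Qed.
Lemma cl_full_sub T : card_le T (sub T (fun _ => True)).
Proof. exists (fun a => exist _ a I). intros a b E. apply (f_equal (@proj1_sig _ _)) in E. auto. Qed.

Definition fin n := sub nat (fun k => (k < n)%nat).

Lemma pigeon_fun : forall n (f : nat -> nat), (forall i, (f i < n)%nat) -> (forall i j, f i = f j -> i = j) -> False.
Proof.
  induction n as [|n IH]; intros f Hf Hi. specialize (Hf 0%nat); lia.
  destruct (classic (exists i0, f i0 = n)) as [[i0 Hi0]|Hn].
  - apply (IH (fun i => f (if lt_dec i i0 then i else S i))).
    + intros i. assert (f (if lt_dec i i0 then i else S i) <> n).
      { intros E. rewrite <- Hi0 in E. apply Hi in E. destruct (lt_dec i i0); lia. }
      specialize (Hf (if lt_dec i i0 then i else S i)). lia.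
    + intros i j E. apply Hi in E. destruct (lt_dec i i0), (lt_dec j i0); lia.
  - apply (IH f); auto. intros i. specialize (Hf i). assert (f i <> n) by (intro; apply Hn; eauto). lia.
Qed.

Lemma pigeon n : ~ card_le nat (fin n).
Proof. intros [f Hf]. apply (pigeon_fun n (fun i => proj1_sig (f i))). intros; apply (proj2_sig (f i)).
  intros i j E. apply Hf. apply sub_eq; auto. Qed.

Lemma finite_or_infinite A : card_le nat A \/ exists n, card_le A (fin n).
Proof.
  destruct (classic (exists n, card_le A (fin n))) as [|Hn]; [right; auto|left].
  destruct (classic (inhabited A)) as [[a0]|Hne].
  2:{ exfalso. apply Hn. exists 0%nat. exists (fun a => False_rect _ (Hne (inhabits a))). intros a; exfalso; apply Hne; constructor; auto. }
  set (F := fun n (rec : forall k, (k < n)%nat -> A) => epsilon (inhabits a0) (fun a => forall k (H : (k < n)%nat), rec k H <> a)).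
  set (h := Fix lt_wf (fun _ => A) F).
  assert (Hh : forall n, h n = F n (fun k _ => h k)).
  { intros n. unfold h.
    assert (ext : forall x (f1 f2 : forall y, (y < x)%nat -> A), (forall y p, f1 y p = f2 y p) -> F x f1 = F x f2).
    { intros x f1 f2 Hf.
      assert (f1 = f2) by (apply functional_extensionality_dep; intros y; apply functional_extensionality_dep; auto).
      subst; auto. }
    exact (Fix_eq lt_wf (fun _ => A) F ext n). }
  assert (Hspec : forall n k, (k < n)%nat -> h k <> h n).
  { intros n. rewrite (Hh n). unfold F at 1.
    apply (epsilon_spec (inhabits a0) (fun a => forall k (H : (k < n)%nat), h k <> a)).
    apply NNPP. intros Hno. apply Hn. exists n.
    assert (Hall : forall a, exists k, (k < n)%nat /\ h k = a).
    { intros a. apply NNPP. intros Hk. apply Hno. exists a. intros k H E. apply Hk. eauto. }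
    exists (fun a => exist _ (epsilon (inhabits 0%nat) (fun k => (k < n)%nat /\ h k = a))
                     (proj1 (epsilon_spec (inhabits 0%nat) _ (Hall a)))).
    intros a b E. apply (f_equal (@proj1_sig _ _)) in E. simpl in E.
    destruct (epsilon_spec (inhabits 0%nat) _ (Hall a)) as [_ Ea].
    destruct (epsilon_spec (inhabits 0%nat) _ (Hall b)) as [_ Eb]. rewrite <- Ea, <- Eb, E. auto. }
  exists h. intros i j E. destruct (lt_eq_lt_dec i j) as [[H|H]|H]; auto.
  - exfalso. apply (Hspec j i H E).
  - exfalso. apply (Hspec i j H). auto.
Qed.

Lemma fin_prod A B n m : card_le A (fin n) -> card_le B (fin m) -> card_le (A * B) (fin (n * m)).
Proof.
  intros [f Hf] [g Hg].
  assert (Hb : forall p : A * B, (proj1_sig (f (fst p)) * m + proj1_sig (g (snd p)) < n * m)%nat).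
  { intros [a b]. simpl. destruct (f a) as [x Hx], (g b) as [y Hy]. simpl. nia. }
  exists (fun p => exist (fun k => (k < n * m)%nat) _ (Hb p)). intros [a b] [a' b'] E. apply (f_equal (@proj1_sig _ _)) in E. simpl in E.
  destruct (f a) as [x Hx] eqn:Ea, (g b) as [y Hy] eqn:Eb, (f a') as [x' Hx'] eqn:Ea', (g b') as [y' Hy'] eqn:Eb'. simpl in E.
  assert (m <> 0%nat) by lia.
  assert (E1 : ((x * m + y) / m = (x' * m + y') / m)%nat) by (rewrite E; auto).
  rewrite !Nat.div_add_l, !Nat.div_small in E1 by lia.
  assert (x = x') by lia. assert (y = y') by (subst; lia). subst.
  f_equal; [apply Hf|apply Hg]; rewrite ?Ea, ?Ea', ?Eb, ?Eb'; f_equal; apply proof_irrelevance.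
Qed.

Lemma fin_option A n : card_le A (fin n) -> card_le (option A) (fin (S n)).
Proof.
  intros [f Hf].
  assert (Hb : forall o : option A, ((match o with None => n | Some a => proj1_sig (f a) end) < S n)%nat).
  { intros [a|]; [destruct (f a); simpl; lia|lia]. }
  exists (fun o => exist (fun k => (k < S n)%nat) _ (Hb o)). intros [a|] [b|] E; apply (f_equal (@proj1_sig _ _)) in E; simpl in E; auto.
  - f_equal. apply Hf, sub_eq; auto.
  - destruct (f a); simpl in E; lia.
  - destruct (f b); simpl in E; lia.
Qed.

Lemma inf_option A : card_le nat A -> card_le (option A) A.
Proof.
  intros [h Hh].
  set (g := fun o : option A => match o with
    | None => h 0%nat
    | Some a => match excluded_middle_informative (exists k, h k = a) with
                | left H => h (S (proj1_sig (constructive_indefinite_description _ H)))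
                | right _ => a end end).
  exists g. intros [a|] [b|] E; unfold g in E; auto.
  - destruct (excluded_middle_informative (exists k, h k = a)) as [Ha|Ha];
    destruct (excluded_middle_informative (exists k, h k = b)) as [Hb|Hb].
    + destruct (constructive_indefinite_description _ Ha) as [k Hk], (constructive_indefinite_description _ Hb) as [k' Hk'].
      simpl in E. apply Hh in E. inversion E. subst. auto.
    + exfalso. apply Hb. eauto.
    + exfalso. apply Ha. eauto.
    + subst; auto.
  - destruct (excluded_middle_informative (exists k, h k = a)) as [Ha|Ha].
    + destruct (constructive_indefinite_description _ Ha) as [k Hk]. simpl in E. apply Hh in E. discriminate.
    + exfalso. apply Ha. eauto.
  - destruct (excluded_middle_informative (exists k, h k = b)) as [Hb|Hb].
    + destruct (constructive_indefinite_description _ Hb) as [k Hk]. simpl in E. apply Hh in E. discriminate.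
    + exfalso. apply Hb. eauto.
Qed.

Open Scope R_scope.
Close Scope R_scope.

Definition seg {I : Type} (lt : I -> I -> Prop) (b : I) := sub I (fun j => lt j b).
Definition segle {I : Type} (lt : I -> I -> Prop) (b : I) := sub I (fun j => lt j b \/ j = b).

Lemma segle_option I (lt : I -> I -> Prop) m : card_le (segle lt m) (option (seg lt m)).
Proof.
  exists (fun x => match excluded_middle_informative (lt (proj1_sig x) m) with
                   | left H => Some (exist _ (proj1_sig x) H) | right _ => None end).
  intros [x Hx] [y Hy]; simpl.
  destruct (excluded_middle_informative (lt x m)) as [A|A], (excluded_middle_informative (lt y m)) as [B|B];
    intros E; try discriminate.
  - inversion E. subst. apply sub_eq; auto.
  - apply sub_eq; simpl. destruct Hx, Hy; try contradiction. congruence.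
Qed.

Definition lex2 {A B : Type} (ra : A -> A -> Prop) (rb : B -> B -> Prop) (p q : A * B) : Prop :=
  ra (fst p) (fst q) \/ (fst p = fst q /\ rb (snd p) (snd q)).

Lemma wf_lex2 A B ra rb : well_founded ra -> well_founded rb -> well_founded (@lex2 A B ra rb).
Proof.
  intros Ha Hb [a b]. revert b. induction a as [a IHa] using (well_founded_induction_type Ha).
  intros b. induction b as [b IHb] using (well_founded_induction_type Hb).
  constructor. intros [a' b'] [H|[E H]]; simpl in *.
  - apply IHa; auto.
  - subst. apply IHb; auto.
Qed.

Lemma tri_lex2 A B (ra : A -> A -> Prop) (rb : B -> B -> Prop) :
  (forall a b, ra a b \/ a = b \/ ra b a) -> (forall a b, rb a b \/ a = b \/ rb b a) ->
  forall p q, lex2 ra rb p q \/ p = q \/ lex2 ra rb q p.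
Proof.
  intros Ha Hb [a b] [a' b']. unfold lex2; simpl. destruct (Ha a a') as [H|[H|H]]; auto.
  subst. destruct (Hb b b') as [H|[H|H]]; subst; auto.
Qed.

Definition mx {I} (lt : I -> I -> Prop) (a b : I) : I :=
  if excluded_middle_informative (lt a b) then b else a.

Lemma gen (I : Type) (lt : I -> I -> Prop) (P : I -> Prop) :
  well_founded lt -> (forall a b, lt a b \/ a = b \/ lt b a) -> (forall a b c, lt a b -> lt b c -> lt a c) ->
  card_le nat (sub I P) ->
  (forall m, P m -> ~ card_le (sub I P) (seg lt m)) ->
  (forall m, P m -> card_le nat (seg lt m) -> card_le (seg lt m * seg lt m) (seg lt m)) ->
  card_le (sub I P * sub I P) (sub I P).
Proof.
  intros Hwf Htri Htr Hinf Hini IH.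
  set (A := sub I P).
  assert (mx1 : forall a b, lt a (mx lt a b) \/ a = mx lt a b).
  { intros a b. unfold mx. destruct (excluded_middle_informative (lt a b)); auto. }
  assert (mx2 : forall a b, lt b (mx lt a b) \/ b = mx lt a b).
  { intros a b. unfold mx. destruct (excluded_middle_informative (lt a b)); auto.
    destruct (Htri a b) as [H|[H|H]]; subst; auto. contradiction. }
  assert (mx3 : forall a b, mx lt a b = a \/ mx lt a b = b).
  { intros a b. unfold mx. destruct (excluded_middle_informative (lt a b)); auto. }
  set (key := fun w : A * A => (mx lt (proj1_sig (fst w)) (proj1_sig (snd w)), (proj1_sig (fst w), proj1_sig (snd w)))).
  set (rk := lex2 lt (lex2 lt lt)).
  set (wlt := fun w w' : A * A => rk (key w) (key w')).
  assert (Wwf : well_founded wlt) by (apply (wf_inverse_image _ _ rk key); apply wf_lex2; [|apply wf_lex2]; auto).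
  assert (Wtri : forall w w', wlt w w' \/ w = w' \/ wlt w' w).
  { intros w w'. unfold wlt. destruct (tri_lex2 _ _ _ _ Htri (tri_lex2 _ _ _ _ Htri Htri) (key w) (key w')) as [H|[H|H]]; auto.
    right; left. destruct w as [a b], w' as [a' b']. unfold key in H; simpl in H. inversion H.
    f_equal; apply sub_eq; auto. }
  assert (lel : forall a b c, (lt a b \/ a = b) -> (lt b c \/ b = c) -> lt a c \/ a = c).
  { intros a b c [H1| ->] [H2| ->]; eauto. }
  assert (Hbelow : forall w w', wlt w' w -> (lt (proj1_sig (fst w')) (fst (key w)) \/ proj1_sig (fst w') = (fst (key w))) /\
                                           (lt (proj1_sig (snd w')) (fst (key w)) \/ proj1_sig (snd w') = (fst (key w)))).
  { intros w w' H. unfold wlt, rk, lex2 in H. simpl in H.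
    assert (K : lt (fst (key w')) (fst (key w)) \/ (fst (key w')) = (fst (key w))) by (destruct H as [H|[H _]]; auto).
    split; [eapply lel; [apply mx1|exact K]|eapply lel; [apply mx2|exact K]]. }
  destruct Hinf as [h0 Hh0].
  set (F := fun w (rec : forall w', wlt w' w -> A) => epsilon (inhabits (h0 0%nat)) (fun y => forall w' (H : wlt w' w), rec w' H <> y)).
  set (phi := Fix Wwf (fun _ => A) F).
  assert (Hphi : forall w, phi w = F w (fun w' _ => phi w')).
  { intros w. unfold phi.
    assert (ext : forall x (f1 f2 : forall y, wlt y x -> A), (forall y p, f1 y p = f2 y p) -> F x f1 = F x f2).
    { intros x f1 f2 Hf.
      assert (f1 = f2) by (apply functional_extensionality_dep; intros y; apply functional_extensionality_dep; auto).
      subst; auto. }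
    exact (Fix_eq Wwf (fun _ => A) F ext w). }
  assert (Hspec : forall w w', wlt w' w -> phi w' <> phi w).
  { intros w. rewrite (Hphi w). unfold F at 1.
    apply (epsilon_spec (inhabits (h0 0%nat)) (fun y => forall w' (H : wlt w' w), phi w' <> y)).
    apply NNPP. intros Hno.
    assert (Hall : forall y, exists w', wlt w' w /\ phi w' = y).
    { intros y. apply NNPP. intros Hk. apply Hno. exists y. intros w' H E. apply Hk. eauto. }
    set (m := (fst (key w))).
    assert (Pm : P m).
    { unfold m, key; simpl. destruct (mx3 (proj1_sig (fst w)) (proj1_sig (snd w))) as [-> | ->]; apply proj2_sig. }
    assert (C1 : card_le A (segle lt m * segle lt m)).
    { exists (fun y => let w' := epsilon (inhabits w) (fun w' => wlt w' w /\ phi w' = y) in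
        (exist (fun j => lt j m \/ j = m) (proj1_sig (fst w')) (proj1 (Hbelow w w' (proj1 (epsilon_spec _ _ (Hall y))))),
         exist (fun j => lt j m \/ j = m) (proj1_sig (snd w')) (proj2 (Hbelow w w' (proj1 (epsilon_spec _ _ (Hall y))))))).
      intros y y' E.
      assert (E1 := f_equal (fun p => proj1_sig (fst p)) E). assert (E2 := f_equal (fun p => proj1_sig (snd p)) E).
      simpl in E1, E2.
      pose proof (proj2 (epsilon_spec (inhabits w) _ (Hall y))) as Ey. pose proof (proj2 (epsilon_spec (inhabits w) _ (Hall y'))) as Ey'.
      rewrite <- Ey, <- Ey'. f_equal.
      assert (Heq : forall p q : A * A, proj1_sig (fst p) = proj1_sig (fst q) -> proj1_sig (snd p) = proj1_sig (snd q) -> p = q).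
      { intros [a b] [a' b'] ? ?. f_equal; apply sub_eq; auto. }
      apply Heq; auto. }
    destruct (finite_or_infinite (seg lt m)) as [Hi|[n Hn]].
    - apply (Hini m Pm). eapply cl_trans; [exact C1|].
      eapply cl_trans; [apply cl_prod; (eapply cl_trans; [apply segle_option|apply cl_option]); apply cl_refl|].
      eapply cl_trans; [apply cl_prod; apply inf_option; auto|]. apply IH; auto.
    - apply (pigeon (S n * S n)). eapply cl_trans; [exists h0; exact Hh0|]. eapply cl_trans; [exact C1|].
      apply fin_prod; (eapply cl_trans; [apply segle_option|apply fin_option; auto]). }
  exists phi. intros w w' E. destruct (Wtri w w') as [H|[H|H]]; auto.
  - exfalso. apply (Hspec w' w H E).
  - exfalso. apply (Hspec w w' H). auto.
Qed.

Open Scope R_scope.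
Close Scope R_scope.

Lemma hess_seg (I : Type) (lt : I -> I -> Prop) :
  well_founded lt -> (forall a b, lt a b \/ a = b \/ lt b a) -> (forall a b c, lt a b -> lt b c -> lt a c) ->
  forall b, card_le nat (seg lt b) -> card_le (seg lt b * seg lt b) (seg lt b).
Proof.
  intros Hwf Htri Htr b. induction b as [b IHb] using (well_founded_induction Hwf). intros Hinf.
  destruct (classic (exists d, lt d b /\ card_le (seg lt b) (seg lt d))) as [[d [Hd Hc]]|Hn].
  - assert (Hsub : card_le (seg lt d) (seg lt b)) by (apply cl_sub; eauto).
    eapply cl_trans; [apply cl_prod; exact Hc|]. eapply cl_trans; [apply IHb; auto; eapply cl_trans; eauto|]. auto.
  - apply (gen I lt (fun j => lt j b)); auto.
    intros m Hm Hc. apply Hn. eauto.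
Qed.

Lemma hess_I (I : Type) (lt : I -> I -> Prop) :
  initial_ordinal I lt -> card_le nat I -> card_le (I * I) I.
Proof.
  intros (Hirr & Htr & Htri & Hwf & Hini) Hinf.
  assert (K : card_le (sub I (fun _ => True) * sub I (fun _ => True)) (sub I (fun _ => True))).
  { apply (gen I lt (fun _ => True)); auto.
    - eapply cl_trans; [exact Hinf|apply cl_full_sub].
    - intros m _ Hc. apply (Hini m). eapply cl_trans; [apply cl_full_sub|exact Hc].
    - intros m _. apply hess_seg; auto. }
  eapply cl_trans; [apply cl_prod; apply cl_full_sub|]. eapply cl_trans; [exact K|apply cl_sub_full].
Qed.

Fixpoint lcode {A : Type} (p : A * A -> A) (a0 : A) (l : list A) : A :=
  match l with nil => a0 | a :: l' => p (a, lcode p a0 l') end.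

Lemma list_code A : card_le nat A -> card_le (A * A) A -> card_le (list A) A.
Proof.
  intros [h Hh] [p Hp]. exists (fun l => p (h (length l), lcode p (h 0%nat) l)).
  intros l l' E. apply Hp in E. inversion E as [[E1 E2]]. apply Hh in E1. clear E.
  revert l' E1 E2. induction l as [|a l IH]; intros [|a' l'] E1 E2; simpl in *; try discriminate; auto.
  apply Hp in E2. inversion E2. subst. f_equal. apply IH; auto.
Qed.

Lemma least_el (I : Type) (lt : I -> I -> Prop) (S : I -> Prop) :
  well_founded lt -> (exists y, S y) -> exists m, S m /\ forall y, S y -> ~ lt y m.
Proof.
  intros Hwf [y Hy]. apply NNPP. intros Hn. revert Hy.
  induction y as [y IH] using (well_founded_induction Hwf). intros Hy.
  apply Hn. exists y. split; auto. intros z Hz Hzy. apply (IH z Hzy Hz).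
Qed.

Lemma collapse (I : Type) (lt : I -> I -> Prop) (Q : I -> Prop) :
  well_founded lt -> (forall a b, lt a b \/ a = b \/ lt b a) -> (forall a b c, lt a b -> lt b c -> lt a c) ->
  ~ card_le I (sub I Q) -> exists g, card_le (sub I Q) (seg lt g) /\ card_le (seg lt g) (sub I Q).
Proof.
  intros Hwf Htri Htr HnI.
  assert (inh : inhabited I).
  { apply NNPP; intro Hn; apply HnI. exists (fun i => False_rect _ (Hn (inhabits i))). intros a; exfalso; apply Hn; constructor; auto. }
  set (F := fun x (rec : forall x', lt x' x -> I) => epsilon (inhabits x) (fun y =>
     (~ exists x' (H : lt x' x), Q x' /\ rec x' H = y) /\ forall z, lt z y -> exists x' (H : lt x' x), Q x' /\ rec x' H = z)).
  set (r := Fix Hwf (fun _ => I) F).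
  assert (Hr : forall x, r x = F x (fun x' _ => r x')).
  { intros x. unfold r.
    assert (ext : forall x (f1 f2 : forall y, lt y x -> I), (forall y p, f1 y p = f2 y p) -> F x f1 = F x f2).
    { intros x0 f1 f2 Hf.
      assert (f1 = f2) by (apply functional_extensionality_dep; intros y; apply functional_extensionality_dep; auto).
      subst; auto. }
    exact (Fix_eq Hwf (fun _ => I) F ext x). }
  assert (Hspec : forall x, (~ exists x' (H : lt x' x), Q x' /\ r x' = r x) /\
                            forall z, lt z (r x) -> exists x' (H : lt x' x), Q x' /\ r x' = z).
  { intros x. rewrite (Hr x). unfold F.
    apply (epsilon_spec (inhabits x) (fun y => (~ exists x' (H : lt x' x), Q x' /\ r x' = y) /\
       forall z, lt z y -> exists x' (H : lt x' x), Q x' /\ r x' = z)).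
    destruct (least_el I lt (fun y => ~ exists x' (H : lt x' x), Q x' /\ r x' = y) Hwf) as [m [Hm1 Hm2]].
    - apply NNPP. intros Hno. apply HnI.
      assert (Hall : forall y, exists x', Q x' /\ r x' = y).
      { intros y. apply NNPP. intros Hk. apply Hno. exists y. intros [x' [H [A B]]]. apply Hk; eauto. }
      exists (fun y => exist Q (epsilon (inhabits x) (fun x' => Q x' /\ r x' = y)) (proj1 (epsilon_spec _ _ (Hall y)))).
      intros y y' E. apply (f_equal (@proj1_sig _ _)) in E. simpl in E.
      rewrite <- (proj2 (epsilon_spec (inhabits x) _ (Hall y))), <- (proj2 (epsilon_spec (inhabits x) _ (Hall y'))), E. auto.
    - exists m. split; auto. intros z Hz. apply NNPP. intros Hn. apply (Hm2 z Hn Hz). }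
  assert (Hinj : forall x x', Q x -> Q x' -> r x = r x' -> x = x').
  { intros x x' Hx Hx' E. destruct (Htri x x') as [H|[H|H]]; auto.
    - exfalso. apply (proj1 (Hspec x')). exists x, H. auto.
    - exfalso. apply (proj1 (Hspec x)). exists x', H. auto. }
  set (Im := fun y => exists x, Q x /\ r x = y).
  assert (Hdc : forall y z, Im y -> lt z y -> Im z).
  { intros y z [x [Hx <-]] Hz. destruct (proj2 (Hspec x) z Hz) as [x' [H [A B]]]. exists x'; auto. }
  destruct (least_el I lt (fun y => ~ Im y) Hwf) as [g [Hg1 Hg2]].
  { apply NNPP. intros Hno. apply HnI.
    assert (Hall : forall y, exists x', Q x' /\ r x' = y).
    { intros y. apply NNPP. intros Hk. apply Hno. exists y. auto. }
    exists (fun y => exist Q (epsilon inh (fun x' => Q x' /\ r x' = y)) (proj1 (epsilon_spec inh _ (Hall y)))).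
    intros y y' E. apply (f_equal (@proj1_sig _ _)) in E. simpl in E.
    rewrite <- (proj2 (epsilon_spec inh _ (Hall y))), <- (proj2 (epsilon_spec inh _ (Hall y'))), E. auto. }
  assert (Hlt : forall y, Im y -> lt y g).
  { intros y Hy. destruct (Htri y g) as [H|[H|H]]; auto; exfalso.
    - subst; auto.
    - apply Hg1. eapply Hdc; eauto. }
  exists g. split.
  - exists (fun x => exist (fun j => lt j g) (r (proj1_sig x)) (Hlt _ (ex_intro _ (proj1_sig x) (conj (proj2_sig x) eq_refl)))).
    intros x x' E. apply (f_equal (@proj1_sig _ _)) in E. simpl in E. apply sub_eq. apply Hinj; auto; apply proj2_sig.
  - assert (Hall : forall y : seg lt g, exists x', Q x' /\ r x' = proj1_sig y).
    { intros [y Hy]. simpl. apply NNPP. intros Hk. apply (Hg2 y); auto. }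
    exists (fun y => exist Q (epsilon (inhabits g) (fun x' => Q x' /\ r x' = proj1_sig y)) (proj1 (epsilon_spec _ _ (Hall y)))).
    intros y y' E. apply (f_equal (@proj1_sig _ _)) in E. simpl in E. apply sub_eq.
    rewrite <- (proj2 (epsilon_spec (inhabits g) _ (Hall y))), <- (proj2 (epsilon_spec (inhabits g) _ (Hall y'))), E. auto.
Qed.

Open Scope R_scope.

Definition G0 {X : RBanach} (Q : X -> Prop) : X -> R -> Prop := fun w r => Q w /\ r = 0.

Lemma lincomb_delta (X : RBanach) n k t (w : nat -> X) : (k < n)%nat ->
  lincomb n (fun i => if Nat.eq_dec i k then t else 0) w = vscal t (w k).
Proof.
  induction n; intros H; [lia|]. simpl. destruct (Nat.eq_dec n k).
  - subst. rewrite (lincomb_ext _ _ _ (fun _ => 0)), lincomb_zero, vadd0l; auto.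
    intros i Hi. destruct (Nat.eq_dec i k); [lia|auto].
  - rewrite IHn by lia. rewrite vscal0, vadd0. auto.
Qed.

Lemma fin_case (X : RBanach) n (Q : X -> Prop) : infinite_dimensional X -> card_le (sub X Q) (fin n) ->
  exists z d, 0 < d /\ forall l, gover (G0 Q) l -> d <= vnorm (vsub z (gv l)).
Proof.
  intros Hinf [f Hf].
  set (w := fun k => match excluded_middle_informative (exists q : sub X Q, proj1_sig (f q) = k) with
             | left H => proj1_sig (proj1_sig (constructive_indefinite_description _ H)) | right _ => vzero end).
  assert (Hw : forall q : sub X Q, w (proj1_sig (f q)) = proj1_sig q).
  { intros q. unfold w. destruct (excluded_middle_informative _) as [H|H]; [|exfalso; apply H; eauto].
    destruct (constructive_indefinite_description _ H) as [q' Hq']. simpl. f_equal. apply Hf. apply sub_eq; auto. }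
  assert (Hl : forall l, gover (G0 Q) l -> exists c, gv l = lincomb n c w).
  { induction l as [|[t [x r]] l IH]; intros Hl.
    - exists (fun _ => 0). rewrite lincomb_zero. auto.
    - inversion Hl as [|? ? [Hq _] Hl']; subst. destruct (IH Hl') as [c Hc]. simpl in Hq.
      set (q := exist Q x Hq : sub X Q). set (k := proj1_sig (f q)).
      assert (Hk : (k < n)%nat) by (unfold k; apply (proj2_sig (f q))).
      exists (fun i => c i + (if Nat.eq_dec i k then t else 0)). rewrite lincomb_add, lincomb_delta by auto.
      simpl. rewrite Hc. unfold k. rewrite Hw. simpl. apply vaddC. }
  destruct (not_in_span X n w Hinf) as [z Hz].
  assert (Hd : exists d, 0 < d /\ forall c, d <= vnorm (vsub z (lincomb n c w))).
  { apply NNPP. intros Hn. apply Hz. apply closed_span. intros eps Heps. apply NNPP. intros Hn2.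
    apply Hn. exists eps. split; auto. intros c. apply Rnot_lt_le. intros Hc. apply Hn2. exists c; auto. }
  destruct Hd as [d [Hd0 Hd]]. exists z, d. split; auto. intros l Hl0. destruct (Hl l Hl0) as [c ->]. auto.
Qed.


Lemma rat_approx a eps : 0 < eps -> exists (p : Z) (n : nat), Rabs (a - IZR p / INR (S n)) < eps.
Proof.
  intros H. destruct (inv_small eps H) as [N HN]. specialize (HN N (le_n _)).
  set (M := INR (S N)). assert (HM : M = INR N + 1) by (unfold M; rewrite S_INR; auto).
  assert (M > 0) by (rewrite HM; assert (0 <= INR N) by apply pos_INR; lra).
  exists (Int_part (a * M)), N. destruct (base_Int_part (a * M)) as [B1 B2].
  fold M. rewrite <- HM in HN.
  assert (E : a - IZR (Int_part (a * M)) / M = (a * M - IZR (Int_part (a * M))) * / M) by (field; lra).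
  rewrite E, Rabs_mult, (Rabs_right (/ M)) by (left; apply Rinv_0_lt_compat; lra).
  rewrite Rabs_right by lra. apply Rle_lt_trans with (1 * / M); [|lra].
  apply Rmult_le_compat_r; [left; apply Rinv_0_lt_compat; lra|lra].
Qed.

Lemma vsub_scal_l (X : RBanach) t t' (x : X) : vsub (vscal t x) (vscal t' x) = vscal (t - t') x.
Proof. rewrite vsub_scal, vscalA, <- vscalDl. f_equal. ring. Qed.

Lemma Z_nat2 : card_le Z (nat * nat).
Proof. exists (fun z => (Z.to_nat z, Z.to_nat (- z))). intros z z' E. inversion E. lia. Qed.

Lemma inf_case (X : RBanach) (I : Type) (lt : I -> I -> Prop) (al : I) (Q : X -> Prop) :
  initial_ordinal I lt -> dens_eq X I -> card_le nat (seg lt al) -> card_le (sub X Q) (seg lt al) ->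
  exists z d, 0 < d /\ forall l, gover (G0 Q) l -> d <= vnorm (vsub z (gv l)).
Proof.
  intros Hio [_ Hdens] Hinf HQ. destruct Hio as (Hirr & Htr & Htri & Hwf & Hini) eqn:Eio.
  apply NNPP. intros Hn.
  assert (Hd : forall z d, 0 < d -> exists l, gover (G0 Q) l /\ vnorm (vsub z (gv l)) < d).
  { intros z d Hd. apply NNPP. intros Hn2. apply Hn. exists z, d. split; auto. intros l Hl.
    apply Rnot_lt_le. intros Hc. apply Hn2; eauto. }
  set (dec := fun c : list (sub X Q * (Z * nat)) =>
     map (fun e => (IZR (fst (snd e)) / INR (S (snd (snd e))), (proj1_sig (fst e), 0))) c).
  assert (Happ : forall l, gover (G0 Q) l -> forall eps, 0 < eps -> exists c, vnorm (vsub (gv l) (gv (dec c))) < eps).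
  { induction l as [|[t [x r]] l IH]; intros Hl eps Heps.
    - exists nil. simpl. rewrite vsub_self, vnorm0. auto.
    - inversion Hl as [|? ? [Hq _] Hl']; subst. simpl in Hq.
      destruct (IH Hl' (eps / 2)) as [c Hc]; [lra|].
      assert (0 <= vnorm x) by apply vnorm_ge0.
      destruct (rat_approx t (eps / (2 * (vnorm x + 1)))) as [p [n Hpn]]. apply Rdiv_lt_0_compat; lra.
      exists ((exist Q x Hq, (p, n)) :: c).
      change (gv (dec ((exist Q x Hq, (p, n)) :: c))) with (vadd (vscal (IZR p / INR (S n)) x) (gv (dec c))).
      change (gv ((t, (x, r)) :: l)) with (vadd (vscal t x) (gv l)). rewrite vsub_addadd, vsub_scal_l.
      eapply Rle_lt_trans; [apply vnorm_triangle|]. rewrite vnormZ.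
      assert (Rabs (t - IZR p / INR (S n)) * vnorm x <= eps / (2 * (vnorm x + 1)) * vnorm x) by (apply Rmult_le_compat_r; lra).
      assert (eps / (2 * (vnorm x + 1)) * vnorm x <= eps / 2) by (apply frac_le; lra).
      lra. }
  set (D' := fun x => exists c, gv (dec c) = x).
  assert (HD' : dense D').
  { intros x eps Heps. destruct (Hd x (eps / 2)) as [l [Hl Hxl]]; [lra|].
    destruct (Happ l Hl (eps / 2)) as [c Hc]; [lra|]. exists (gv (dec c)). split; [exists c; auto|].
    eapply Rle_lt_trans; [apply (vnorm_tri_sub X x (gv l))|]. lra. }
  apply (Hini al). eapply cl_trans; [apply (Hdens D' HD')|].
  set (A := seg lt al).
  assert (H2 : card_le (A * A) A) by (apply hess_seg; auto).
  assert (C1 : card_le (sub X D') (list (sub X Q * (Z * nat)))).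
  { assert (Hc : forall x : sub X D', exists c, gv (dec c) = proj1_sig x) by (intros [x Hx]; auto).
    exists (fun x => epsilon (inhabits nil) (fun c => gv (dec c) = proj1_sig x)).
    intros x y E. apply sub_eq. rewrite <- (epsilon_spec (inhabits nil) _ (Hc x)), <- (epsilon_spec (inhabits nil) _ (Hc y)), E. auto. }
  eapply cl_trans; [exact C1|]. eapply cl_trans; [|apply list_code; auto]. apply cl_list.
  eapply cl_trans; [|exact H2]. apply cl_prod; auto.
  assert (N2 : card_le (nat * nat) A) by (eapply cl_trans; [apply cl_prod; exact Hinf|exact H2]).
  eapply cl_trans; [|exact H2]. apply cl_prod; auto. eapply cl_trans; [apply Z_nat2|exact N2].
Qed.


Lemma gr_G0 (X : RBanach) (Q : X -> Prop) l : gover (G0 Q) l -> gr l = 0.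
Proof. induction l as [|[t [x r]] l IH]; intros H; simpl; auto. inversion H as [|? ? [_ Hr] Hl]; subst.
  simpl in Hr. rewrite Hr, IH; auto; ring. Qed.

Lemma step_hb (X : RBanach) (I : Type) (lt : I -> I -> Prop) :
  infinite_dimensional X -> initial_ordinal I lt -> dens_eq X I ->
  forall al (Q : X -> Prop), card_le (sub X Q) (seg lt al) ->
  exists z F, in_dual F /\ F z = 1 /\ forall w, Q w -> F w = 0.
Proof.
  intros Hid Hio Hde al Q HQ.
  assert (Hzd : exists z d, 0 < d /\ forall l, gover (G0 Q) l -> d <= vnorm (vsub z (gv l))).
  { destruct (finite_or_infinite (seg lt al)) as [Hi|[n Hn]].
    - apply (inf_case X I lt al Q); auto.
    - apply (fin_case X n Q); auto. eapply cl_trans; eauto. }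
  destruct Hzd as [z [d [Hd0 Hd]]].
  destruct Hio as (Hirr & Htr & Htri & Hwf & Hini).
  destruct Hde as [[D [HD [e He]]] _].
  destruct (hb X I lt D e (fun w r => G0 Q w r \/ (w = z /\ r = 1)) (/ d) Hwf Htri Htr HD He) as [F [HF1 HF2]].
  - left; apply Rinv_0_lt_compat; auto.
  - intros l Hl. destruct (gsplit X (G0 Q) z 1 l Hl) as (l' & s & H1 & H2 & H3).
    rewrite H2, H3, (gr_G0 X Q l' H1). replace (0 + s * 1) with s by ring.
    destruct (Req_dec s 0) as [Hs|Hs].
    + subst. rewrite Rabs_R0. apply Rmult_le_pos; [left; apply Rinv_0_lt_compat; auto|apply vnorm_ge0].
    + assert (E : vadd (gv l') (vscal s z) = vscal s (vsub z (gv (gscale (- / s) l')))).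
      { rewrite gv_scale, vsub_scal, vscalDr, !vscalA. replace (s * -1 * - / s) with 1 by (field; auto).
        rewrite vscal1, vaddC. auto. }
      rewrite E, vnormZ.
      assert (K := Hd (gscale (- / s) l') (gover_scale _ _ _ _ H1)).
      assert (0 < Rabs s) by (apply Rabs_pos_lt; auto).
      apply (Rmult_le_reg_l d); auto. rewrite <- Rmult_assoc, Rinv_r by lra.
      rewrite Rmult_1_l. rewrite (Rmult_comm d). apply Rmult_le_compat_l; lra.
  - exists z, F. split; auto. split.
    + apply HF2. right; auto.
    + intros w Hw. apply HF2. left. split; auto.
Qed.

Lemma part1 (X : RBanach) (I : Type) (lt : I -> I -> Prop) :
  infinite_dimensional X -> initial_ordinal I lt -> dens_eq X I ->
  exists (x : I -> X) (xs : I -> X -> R),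
      (forall a, in_dual (xs a)) /\ (forall a, xs a (x a) = 1) /\ (forall a b, lt b a -> xs a (x b) = 0).
Proof.
  intros Hid Hio Hde. pose proof Hio as (Hirr & Htr & Htri & Hwf & Hini).
  set (Fs := fun a (rec : forall b, lt b a -> X * (X -> R)) =>
    epsilon (inhabits (@vzero X, fun _ : X => 0)) (fun p =>
      in_dual (snd p) /\ snd p (fst p) = 1 /\ forall b (H : lt b a), snd p (fst (rec b H)) = 0)).
  set (P := Fix Hwf (fun _ => (X * (X -> R))%type) Fs).
  assert (HP : forall a, P a = Fs a (fun b _ => P b)).
  { intros a. unfold P.
    assert (ext : forall x (f1 f2 : forall y, lt y x -> X * (X -> R)), (forall y p, f1 y p = f2 y p) -> Fs x f1 = Fs x f2).
    { intros x f1 f2 Hf.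
      assert (f1 = f2) by (apply functional_extensionality_dep; intros y; apply functional_extensionality_dep; auto).
      subst; auto. }
    exact (Fix_eq Hwf (fun _ => (X * (X -> R))%type) Fs ext a). }
  assert (Hspec : forall a, in_dual (snd (P a)) /\ snd (P a) (fst (P a)) = 1 /\ forall b, lt b a -> snd (P a) (fst (P b)) = 0).
  { intros a. rewrite (HP a). unfold Fs.
    match goal with |- context [epsilon ?i ?Pr] => 
      assert (Hex : exists p, Pr p); [|destruct (epsilon_spec i Pr Hex) as [S1 [S2 S3]]; split; [exact S1|split; [exact S2|intros b Hb; exact (S3 b Hb)]]] end.
    set (Q := fun w => exists b, lt b a /\ w = fst (P b)).
    destruct (step_hb X I lt Hid Hio Hde a Q) as [z [F [HF1 [HF2 HF3]]]].
    - assert (Hq : forall w : sub X Q, exists b, lt b a /\ proj1_sig w = fst (P b)) by (intros [w Hw]; auto).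
      exists (fun w => let c := constructive_indefinite_description _ (Hq w) in
                       exist (fun j => lt j a) (proj1_sig c) (proj1 (proj2_sig c))).
      intros w w' E. apply (f_equal (@proj1_sig _ _)) in E. simpl in E. apply sub_eq.
      destruct (constructive_indefinite_description _ (Hq w)) as [b [Lb Eb]].
      destruct (constructive_indefinite_description _ (Hq w')) as [b' [Lb' Eb']]. simpl in E. subst. congruence.
    - exists (z, F). simpl. split; auto. split; auto. intros b Hb. apply HF3. exists b; auto. }
  exists (fun a => fst (P a)), (fun a => snd (P a)). split; [|split]; intros; apply Hspec; auto.
Qed.


Lemma lin_sub (X : RBanach) (g : X -> R) x y : is_linear g -> g (vsub x y) = g x - g y.
Proof. intros [Ha Hs]. unfold vsub. rewrite Ha, vopp_scal, Hs. ring. Qed.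

Lemma nat_inf (X : RBanach) (I : Type) : infinite_dimensional X -> dens_eq X I -> card_le nat I.
Proof.
  intros Hid [[D [HD [e He]]] _]. destruct (Hid 1%nat) as [v Hv].
  assert (Hn : 0 < vnorm (v 0%nat)).
  { destruct (Req_dec (vnorm (v 0%nat)) 0) as [E|E].
    - apply vnorm_eq0 in E. exfalso. assert (K := Hv (fun _ => 1)). simpl in K.
      rewrite E, vscal0r, vadd0 in K. specialize (K eq_refl 0%nat ltac:(lia)). lra.
    - assert (0 <= vnorm (v 0%nat)) by apply vnorm_ge0. lra. }
  set (w := v 0%nat).
  assert (Hc : forall k : nat, exists d : sub X D, vnorm (vsub (vscal (INR k) w) (proj1_sig d)) < vnorm w / 2).
  { intros k. destruct (HD (vscal (INR k) w) (vnorm w / 2)) as [d [Dd Hd]]; [unfold w; lra|]. exists (exist _ d Dd); auto. }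
  destruct (Hc 0%nat) as [d0 _].
  exists (fun k => e (epsilon (inhabits d0)
                      (fun d => vnorm (vsub (vscal (INR k) w) (proj1_sig d)) < vnorm w / 2))).
  intros k m E. apply He in E.
  assert (K1 := epsilon_spec (inhabits d0) _ (Hc k)). assert (K2 := epsilon_spec (inhabits d0) _ (Hc m)). rewrite E in K1.
  assert (K3 := vnorm_tri_sub X (vscal (INR k) w) (proj1_sig (epsilon (inhabits d0)
                      (fun d => vnorm (vsub (vscal (INR m) w) (proj1_sig d)) < vnorm w / 2))) (vscal (INR m) w)).
  rewrite vsub_scal_l, vnormZ in K3. rewrite (vnorm_sub_sym X _ (vscal (INR m) w)) in K3. cbv beta in K2.
  assert (Rabs (INR k - INR m) < 1).
  { apply (Rmult_lt_reg_r (vnorm w)). unfold w; auto. lra. }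
  destruct (Nat.eq_dec k m) as [|Hkm]; auto. exfalso.
  destruct (Nat.lt_total k m) as [Hl|[Hl|Hl]]; [| contradiction |].
  - assert (INR (S k) <= INR m) by (apply le_INR; lia). rewrite S_INR in *.
    assert (1 <= Rabs (INR k - INR m)) by (unfold Rabs; destruct Rcase_abs; lra). lra.
  - assert (INR (S m) <= INR k) by (apply le_INR; lia). rewrite S_INR in *.
    assert (1 <= Rabs (INR k - INR m)) by (unfold Rabs; destruct Rcase_abs; lra). lra.
Qed.

Lemma ball_dual (X : RBanach) (g : X -> R) : in_dual_ball g -> in_dual g.
Proof. intros [Hl Hb]. split; auto. exists 1. intros x. rewrite Rmult_1_l. auto. Qed.

Lemma upper (X : RBanach) (I : Type) (lt : I -> I -> Prop) :
  infinite_dimensional X -> initial_ordinal I lt -> dens_eq X I ->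
  forall Y : (X -> R) -> Prop, (forall f, Y f -> in_dual_ball f) -> lindelof_le Y I.
Proof.
  intros Hid Hio Hde Y HY K U HU Hcov.
  assert (Hnat : card_le nat I) by (eapply nat_inf; eauto).
  assert (H2 : card_le (I * I) I) by (apply (hess_I I lt); auto).
  destruct Hde as [[D [HD [e He]]] _].
  destruct (classic (inhabited K)) as [inh|Hne].
  2:{ exists (fun _ => False). split.
      - exists (fun s => False_rect I (proj2_sig s)). intros [a []].
      - intros f Hf. destruct (Hcov f Hf) as [k _]. exfalso; apply Hne; constructor; auto. }
  set (Bset := fun (b : list (sub X D * (Z * nat)) * nat) (g : X -> R) =>
    forall ent, In ent (fst b) -> Rabs (g (proj1_sig (fst ent)) - IZR (fst (snd ent)) / INR (S (snd (snd ent)))) < / INR (S (snd b))).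
  set (good := fun b k => forall g, in_dual_ball g -> Bset b g -> U k g).
  set (ch := fun b => epsilon inh (good b)).
  exists (fun k => exists b, (exists k', good b k') /\ k = ch b). split.
  - eapply cl_trans with (list (sub X D * (Z * nat)) * nat)%type.
    + assert (Hs : forall s : sub K (fun k => exists b, (exists k', good b k') /\ k = ch b),
                   exists b, (exists k', good b k') /\ proj1_sig s = ch b) by (intros [s Hs]; auto).
      exists (fun s => epsilon (inhabits (nil, 0%nat)) (fun b => (exists k', good b k') /\ proj1_sig s = ch b)).
      intros s s' E. apply sub_eq.
      rewrite (proj2 (epsilon_spec (inhabits (nil, 0%nat)) _ (Hs s))), (proj2 (epsilon_spec (inhabits (nil, 0%nat)) _ (Hs s'))), E.
      auto.
    + eapply cl_trans; [|exact H2]. apply cl_prod; auto.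
      eapply cl_trans; [|apply list_code; auto]. apply cl_list.
      eapply cl_trans; [|exact H2]. apply cl_prod; [exists e; auto|].
      eapply cl_trans; [|exact H2]. apply cl_prod; auto.
      eapply cl_trans; [apply Z_nat2|]. eapply cl_trans; [apply cl_prod; exact Hnat|exact H2].
  - intros f Hf. destruct (Hcov f Hf) as [k0 Hk0]. pose proof (HY f Hf) as Hfb.
    destruct (HU k0 f (ball_dual X f Hfb) Hk0) as (n & xs & eps & Heps & Hn).
    assert (Hp : 0 < eps / 4) by lra. destruct (inv_small _ Hp) as [N HN]. specialize (HN N (le_n _)).
    rewrite <- S_INR in HN. set (eta := / INR (S N)) in *.
    assert (Heta : 0 < eta) by (apply Rinv_0_lt_compat; apply lt_0_INR; lia).
    assert (HL : forall m, exists L : list (sub X D * (Z * nat)),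
       (forall ent, In ent L -> Rabs (f (proj1_sig (fst ent)) - IZR (fst (snd ent)) / INR (S (snd (snd ent)))) < eta) /\
       forall i, (i < m)%nat -> exists ent, In ent L /\ vnorm (vsub (xs i) (proj1_sig (fst ent))) < eps / 4).
    { induction m as [|m [L [L1 L2]]].
      - exists nil. split; [intros _ []|intros; lia].
      - destruct (HD (xs m) (eps / 4) Hp) as [d [Dd Hd]].
        destruct (rat_approx (f d) eta Heta) as [p [q Hpq]].
        exists ((exist D d Dd, (p, q)) :: L). split.
        + intros ent [<-|Hin]; auto.
        + intros i Hi. destruct (Nat.eq_dec i m) as [->|Him].
          * exists (exist D d Dd, (p, q)). split; [left; auto|auto].
          * destruct (L2 i ltac:(lia)) as [ent [E1 E2]]. exists ent. split; [right|]; auto. }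
    destruct (HL n) as [L [L1 L2]].
    assert (Hgood : good (L, N) k0).
    { intros g Hgb HgB. apply Hn. apply ball_dual; auto.
      intros i Hi. destruct (L2 i Hi) as [ent [Ein Ed]]. destruct ent as [[d Dd] [p q]]. cbn [fst snd proj1_sig] in *.
      assert (A1 := HgB _ Ein). assert (A2 := L1 _ Ein). cbn [fst snd proj1_sig] in A1, A2. fold eta in A1.
      destruct Hgb as [Hgl Hgn]. destruct Hfb as [Hfl Hfn].
      assert (A3 := Hgn (vsub (xs i) d)). assert (A4 := Hfn (vsub (xs i) d)).
      rewrite lin_sub in A3, A4 by auto.
      assert (Rabs (g (xs i) - f (xs i)) <= Rabs (g (xs i) - g d) + Rabs (g d - IZR p / INR (S q))
              + Rabs (f d - IZR p / INR (S q)) + Rabs (f (xs i) - f d)).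
      { unfold Rabs; repeat destruct Rcase_abs; lra. }
      lra. }
    exists (ch (L, N)). split.
    + exists (L, N). split; eauto.
    + apply (epsilon_spec inh (good (L, N)) (ex_intro _ k0 Hgood)); auto; intros ent Hin; apply L1; auto.
Qed.


Lemma fin_list A n : card_le A (fin n) -> exists l : list A, forall a, In a l.
Proof.
  intros [f Hf].
  assert (K : forall m, exists l, forall a, (proj1_sig (f a) < m)%nat -> In a l).
  { induction m as [|m [l Hl]].
    - exists nil. intros; lia.
    - destruct (classic (exists a0, proj1_sig (f a0) = m)) as [[a0 Ha0]|Hn].
      + exists (a0 :: l). intros a Ha. destruct (Nat.eq_dec (proj1_sig (f a)) m) as [E|E].
        * left. apply Hf. apply sub_eq. congruence.
        * right. apply Hl. lia.
      + exists l. intros a Ha. apply Hl. destruct (Nat.eq_dec (proj1_sig (f a)) m) as [E|E]; [exfalso; eauto|lia]. }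
  destruct (K n) as [l Hl]. exists l. intros a. apply Hl. apply (proj2_sig (f a)).
Qed.

Lemma hess_J (I : Type) (lt : I -> I -> Prop) J :
  well_founded lt -> (forall a b, lt a b \/ a = b \/ lt b a) -> (forall a b c, lt a b -> lt b c -> lt a c) ->
  card_le J I -> ~ card_le I J -> card_le nat J -> card_le (J * J) J.
Proof.
  intros Hwf Htri Htr [e He] HnI Hinf.
  set (Q := fun i => exists j, e j = i).
  assert (C1 : card_le J (sub I Q)).
  { exists (fun j => exist Q (e j) (ex_intro _ j eq_refl)). intros a b E. apply (f_equal (@proj1_sig _ _)) in E. auto. }
  assert (C2 : card_le (sub I Q) J).
  { destruct Hinf as [h _].
    exists (fun i => epsilon (inhabits (h 0%nat)) (fun j => e j = proj1_sig i)).
    intros [a Ha] [b Hb] E. apply sub_eq. simpl in *.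
    rewrite <- (epsilon_spec (inhabits (h 0%nat)) _ Ha), <- (epsilon_spec (inhabits (h 0%nat)) _ Hb), E. auto. }
  destruct (collapse I lt Q Hwf Htri Htr) as [g [G1 G2]].
  { intros H. apply HnI. eapply cl_trans; eauto. }
  assert (Hs : card_le nat (seg lt g)) by (eapply cl_trans; [exact Hinf|]; eapply cl_trans; eauto).
  eapply cl_trans; [apply cl_prod; (eapply cl_trans; [exact C1|exact G1])|].
  eapply cl_trans; [apply hess_seg; auto|]. eapply cl_trans; eauto.
Qed.

Definition ydual {X : RBanach} (xs : X -> R) (M : R) : X -> R := fun v => xs v / M.

Lemma lower (X : RBanach) (I : Type) (lt : I -> I -> Prop) :
  infinite_dimensional X -> initial_ordinal I lt -> dens_eq X I ->
  forall J : Type, card_le J I -> ~ card_le I J ->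
  exists Y : (X -> R) -> Prop, (forall f, Y f -> in_dual_ball f) /\ ~ lindelof_le Y J.
Proof.
  intros Hid Hio Hde J HJI HIJ.
  pose proof Hio as (Hirr & Htr & Htri & Hwf & Hini).
  assert (Hnat : card_le nat I) by (eapply nat_inf; eauto).
  destruct (part1 X I lt Hid Hio Hde) as [x [xs [Hd [H1 H0]]]].
  set (Cst := fun a => epsilon (inhabits 0) (fun C => forall v, Rabs (xs a v) <= C * vnorm v)).
  assert (HC : forall a v, Rabs (xs a v) <= Cst a * vnorm v).
  { intros a. unfold Cst. apply epsilon_spec. apply (proj2 (Hd a)). }
  set (M := fun a => Rmax 1 (Cst a)).
  assert (HM : forall a, 1 <= M a /\ Cst a <= M a) by (intros; split; [apply Rmax_l|apply Rmax_r]).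
  set (y := fun a => ydual (xs a) (M a)).
  assert (Hyb : forall a, in_dual_ball (y a)).
  { intros a. destruct (Hd a) as [[Ha Hs] _]. destruct (HM a) as [M1 M2]. split; [split|].
    - intros u v. unfold y, ydual. rewrite Ha. field. lra.
    - intros t v. unfold y, ydual. rewrite Hs. field. lra.
    - intros v. unfold y, ydual. unfold Rdiv. rewrite Rabs_mult, Rabs_inv, (Rabs_right (M a)) by lra.
      apply (Rmult_le_reg_r (M a)); [lra|]. rewrite Rmult_assoc, Rinv_l, Rmult_1_r by lra.
      eapply Rle_trans; [apply HC|]. rewrite Rmult_comm. apply Rmult_le_compat_l; [apply vnorm_ge0|lra]. }
  assert (Hy1 : forall a, 0 < y a (x a)).
  { intros a. unfold y, ydual. rewrite H1. destruct (HM a). apply Rdiv_lt_0_compat; lra. }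
  assert (Hy0 : forall a b, lt b a -> y a (x b) = 0).
  { intros a b H. unfold y, ydual. rewrite H0 by auto. unfold Rdiv. ring. }
  assert (LB : forall T : I -> Prop, lindelof_le (fun g => exists b, T b /\ g = y b) J ->
     exists S : sub I T -> Prop, card_le (sub (sub I T) S) J /\
       forall b, T b -> exists k, S k /\ (lt b (proj1_sig k) \/ b = proj1_sig k)).
  { intros T HL. destruct (HL (sub I T) (fun k g => 0 < g (x (proj1_sig k)))) as [S [HS1 HS2]].
    - intros k f Hf Hfk. exists 1%nat, (fun _ => x (proj1_sig k)), (f (x (proj1_sig k))). split; auto.
      intros g Hg Hn. specialize (Hn 0%nat ltac:(lia)). unfold Rabs in Hn. destruct Rcase_abs in Hn; lra.
    - intros f [b [Tb ->]]. exists (exist T b Tb). simpl. auto.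
    - exists S. split; auto. intros b Tb. destruct (HS2 (y b) (ex_intro _ b (conj Tb eq_refl))) as [k [Sk Uk]].
      exists k. split; auto. destruct (Htri b (proj1_sig k)) as [H|[H|H]]; auto.
      exfalso. rewrite Hy0 in Uk by auto. lra. }
  destruct (finite_or_infinite J) as [HJinf|[n HJn]].
  -
    set (T := fun b => card_le (seg lt b) J).
    exists (fun g => exists b, T b /\ g = y b). split; [intros f [b [_ ->]]; auto|].
    intros HL. destruct (LB T HL) as [S [HS1 HS2]].
    assert (NT : ~ card_le (sub I T) J).
    { intros HT. destruct (classic (forall b, T b)) as [Hall|Hn].
      - apply HIJ. eapply cl_trans; [|exact HT]. exists (fun b => exist T b (Hall b)).
        intros a b E. apply (f_equal (@proj1_sig _ _)) in E. auto.
      - destruct (least_el I lt (fun b => ~ T b) Hwf) as [g [Hg1 Hg2]].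
        { apply NNPP. intros Hk. apply Hn. intros b. apply NNPP. intros Hb. apply Hk. eauto. }
        apply Hg1. unfold T. eapply cl_trans; [|exact HT]. apply cl_sub. intros j Hj.
        apply NNPP. intros Hnj. apply (Hg2 j Hnj Hj). }
    apply NT.
    assert (JJ : card_le (J * J) J) by (apply (hess_J I lt J); auto).
    set (hsel := fun (kk : sub (sub I T) S) => proj1_sig (constructive_indefinite_description _ (proj2_sig (proj1_sig kk)))).
    assert (Hhsel : forall kk a b, hsel kk a = hsel kk b -> a = b).
    { intros kk. unfold hsel. destruct (constructive_indefinite_description _ _) as [h Hh]. simpl. auto. }
    set (Gf := fun (kk : sub (sub I T) S) (i : I) =>
       match excluded_middle_informative (lt i (proj1_sig (proj1_sig kk))) with
       | left H => Some (hsel kk (exist _ i H)) | right _ => None end).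
    assert (HG : forall kk i i', Gf kk i = Gf kk i' -> (lt i (proj1_sig (proj1_sig kk)) \/ i = proj1_sig (proj1_sig kk)) ->
                 (lt i' (proj1_sig (proj1_sig kk)) \/ i' = proj1_sig (proj1_sig kk)) -> i = i').
    { intros kk i i' E Hi Hi'. unfold Gf in E.
      destruct (excluded_middle_informative (lt i _)) as [A|A], (excluded_middle_informative (lt i' _)) as [B|B];
        try discriminate.
      - inversion E as [E']. apply Hhsel in E'. apply (f_equal (@proj1_sig _ _)) in E'. auto.
      - destruct Hi, Hi'; try contradiction. congruence. }
    assert (Hk : forall b : sub I T, exists kk : sub (sub I T) S,
       lt (proj1_sig b) (proj1_sig (proj1_sig kk)) \/ proj1_sig b = proj1_sig (proj1_sig kk)).
    { intros [b Tb]. destruct (HS2 b Tb) as [k [Sk Hkb]]. exists (exist S k Sk). auto. }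
    set (kof := fun b => proj1_sig (constructive_indefinite_description _ (Hk b))).
    assert (Hkof : forall b, lt (proj1_sig b) (proj1_sig (proj1_sig (kof b))) \/ proj1_sig b = proj1_sig (proj1_sig (kof b))).
    { intros b. unfold kof. destruct (constructive_indefinite_description _ _) as [kk P]. auto. }
    eapply cl_trans with (sub (sub I T) S * option J)%type.
    + exists (fun b => (kof b, Gf (kof b) (proj1_sig b))). intros b b' E. inversion E as [[E1 E2]].
      apply sub_eq. rewrite E1 in E2. apply (HG (kof b')); auto. rewrite <- E1. apply Hkof.
    + eapply cl_trans; [apply cl_prod; [exact HS1|apply inf_option; auto]|exact JJ].
  -
    set (T := fun _ : I => True).
    exists (fun g => exists b, T b /\ g = y b). split; [intros f [b [_ ->]]; auto|].
    intros HL. destruct (LB T HL) as [S [HS1 HS2]].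
    destruct (fin_list _ n (cl_trans _ _ _ HS1 HJn)) as [l Hl].
    set (ls := map (fun s : sub (sub I T) S => proj1_sig (proj1_sig s)) l).
    pose proof Hnat as [h0 Hh0].
    destruct (list_maxI I lt Htri Htr ls) as [m [Hm1 Hm2]].
    { destruct (HS2 (h0 0%nat) Logic.I) as [k [Sk _]]. intros E.
      assert (In (exist S k Sk) l) by apply Hl. unfold ls in E. destruct l; [contradiction|discriminate]. }
    assert (Hle : forall b, lt b m \/ b = m).
    { intros b. destruct (HS2 b Logic.I) as [k [Sk Hk]].
      assert (In (proj1_sig k) ls) by (unfold ls; apply in_map_iff; exists (exist S k Sk); auto).
      destruct (Hm2 _ H) as [A|A]; destruct Hk as [B|B]; subst; eauto. }
    assert (CI : card_le I (option (seg lt m))).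
    { eapply cl_trans; [|apply segle_option]. exists (fun b => exist _ b (Hle b)).
      intros a b E. apply (f_equal (@proj1_sig _ _)) in E. auto. }
    destruct (finite_or_infinite (seg lt m)) as [Hs|[n' Hn']].
    + apply (Hini m). eapply cl_trans; [exact CI|apply inf_option; auto].
    + apply (pigeon (Datatypes.S n')). eapply cl_trans; [exists h0; exact Hh0|].
      eapply cl_trans; [exact CI|apply fin_option; auto].
Qed.


Theorem mainTheorem17 (X : RBanach) (I : Type) (lt : I -> I -> Prop) :
  infinite_dimensional X ->
  initial_ordinal I lt ->
  dens_eq X I ->
  (exists (x : I -> X) (xs : I -> X -> R),
      (forall a, in_dual (xs a)) /\
      (forall a, xs a (x a) = 1) /\
      (forall a b, lt b a -> xs a (x b) = 0)) /\
  hL_dual_ball_eq X I.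
Proof.
  intros Hid Hio Hde. split.
  - apply part1; auto.
  - split.
    + apply (upper X I lt); auto.
    + intros J HJ HnJ. apply (lower X I lt); auto.
Qed.
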